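(* There exist 4-GDDs of types $39^8 120^1$, $39^8 123^1$, $39^8 126^1$, $39^8 129^1$ and $39^8 132^1$.
   Context: A 4-GDD of type $g_1^{u_1}\cdots g_r^{u_r}$ is a triple $(V,\mathcal G,\mathcal B)$ where $V$ is a set of $u_1g_1+\cdots+u_rg_r$ points, $\mathcal G$ is a partition of $V$ into $u_i$ groups of size $g_i$ for each $i$, and $\mathcal B$ is a non-empty collection of 4-element subsets (blocks) such that every pair of points from distinct groups lies in exactly one block and no pair from the same group lies in any block. *)

(* Defs.v *)
From mathcomp Require Import all_boot.
Set Implicit Arguments. Unset Strict Implicit. Unset Printing Implicit Defensive.

(* A GDD type g_1^{u_1} ... g_r^{u_r} is encoded as the list [:: (g_1,u_1); ...; (g_r,u_r)]. *)
Definition gdd_type := seq (nat * nat).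

Definition type_sizes (t : gdd_type) : seq nat :=
  flatten [seq nseq p.2 p.1 | p <- t].

Definition type_points (t : gdd_type) : nat := \sum_(p <- t) p.2 * p.1.

Definition is_4GDD (T : finType) (t : gdd_type)
    (G : {set {set T}}) (B : {set {set T}}) : Prop :=
  [/\ #|T| = type_points t,
      partition G [set: T],
      perm_eq [seq #|X : {set T}| | X <- enum G] (type_sizes t) &
   [/\ B != set0,
      (forall b : {set T}, b \in B -> #|b| = 4),
      (forall x y, x != y -> pblock G x = pblock G y ->
         forall b : {set T}, b \in B -> ~~ ((x \in b) && (y \in b)))
    & (forall x y, pblock G x != pblock G y ->
         #|[set b in B | (x \in b) && (y \in b)]| = 1)]].

Definition exists_4GDD (t : gdd_type) : Prop :=
  exists (G B : {set {set 'I_(type_points t)}}), is_4GDD t G B.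

(* Main.v *)
Require Import Defs.
From mathcomp Require Import all_boot zify.
Set Implicit Arguments. Unset Strict Implicit. Unset Printing Implicit Defensive.

(* Proof strategy: each design is given by base blocks over Z_39 x {0..7}
   (points 39*g + x) plus infinite points 312 + j; the full block set is the
   Z_39-development.  The GDD property is reduced (difference method) to a small
   boolean check [design_ok] on the base blocks, evaluated by computation. *)

Definition blocks_ok (n : nat) (bl : seq (seq nat)) : bool :=
  all (fun s => (size s == 4) && uniq s && all (fun a => a < n) s) bl.

Section Main.
Variable t : gdd_type.
Local Notation n := (type_points t).
Variables (f : nat -> nat) (ng : nat) (bl : seq (seq nat)).
Hypotheses (Hb : blocks_ok n bl) (Hne : bl != [::])
  (count_one : forall a b, a < b -> b < n -> f a != f b ->
     count (fun s => (a \in s) && (b \in s)) bl = 1)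
  (no_same : forall a b s, a < b -> f a == f b -> s \in bl -> ~~ ((a \in s) && (b \in s)))
  (Hf : all (fun x => f x < ng) (iota 0 n))
  (Hsurj : all (fun i => has (fun x => f x == i) (iota 0 n)) (iota 0 ng))
  (Hsz : perm_eq [seq count (fun y => f y == i) (iota 0 n) | i <- iota 0 ng] (type_sizes t)).

Definition tos (s : seq nat) : {set 'I_n} := [set x : 'I_n | val x \in s].
Definition Bs : {set {set 'I_n}} := [set:: map tos bl].
Definition Gs : {set {set 'I_n}} := preim_partition (fun x : 'I_n => f x) [set: 'I_n].
Definition Fs (i : nat) : {set 'I_n} := [set y : 'I_n | f y == i].

Lemma Gs_part : partition Gs [set: 'I_n].
Proof. exact: preim_partitionP. Qed.

Lemma pblockE (x : 'I_n) : pblock Gs x = [set y : 'I_n | f x == f y].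
Proof.
apply/setP => y; rewrite inE pblock_equivalence_partition ?inE //.
by split=> // /eqP ->.
Qed.

Lemma pblock_eq (x y : 'I_n) : (pblock Gs x == pblock Gs y) = (f x == f y).
Proof.
rewrite !pblockE; apply/eqP/eqP => [/setP /(_ y) | ->].
  by rewrite !inE eqxx => /eqP.
by apply/setP => z; rewrite !inE.
Qed.

Lemma all_bl s : s \in bl -> [/\ size s = 4, uniq s & all (fun a => a < n) s].
Proof.
move=> sb; move/allP: Hb => /(_ s sb) /andP [/andP [/eqP h1 h2] h3]; by split.
Qed.

Lemma card_tos s : s \in bl -> #|tos s| = 4.
Proof.
case/all_bl => sz us alls.
have -> : #|tos s| = #|pmap (insub : nat -> option 'I_n) s|.
  by apply: eq_card => x; rewrite inE mem_pmap_sub.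
have U : uniq (pmap (insub : nat -> option 'I_n) s) by apply: pmap_sub_uniq.
move/card_uniqP: U => ->.
by rewrite size_pmap_sub; move: alls; rewrite all_count => /eqP ->.
Qed.

Lemma card_Fs i : #|Fs i| = count (fun y => f y == i) (iota 0 n).
Proof.
rewrite -val_enum_ord count_map cardsE cardE /enum_mem size_filter.
rewrite (@eq_filter _ _ predT) ?filter_predT //.
Qed.

Lemma Fs_ex i : i < ng -> exists x : 'I_n, f x = i.
Proof.
move=> ilt; move/allP: Hsurj => /(_ i); rewrite mem_iota /= => /(_ ilt).
case/hasP => x; rewrite mem_iota /= => xn /eqP fx.
by exists (Ordinal xn).
Qed.

Lemma mem_Gs X : (X \in Gs) = (X \in map Fs (iota 0 ng)).
Proof.
apply/imsetP/mapP => [[x _ ->] | [i ilt ->]].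
  have hx : val x \in iota 0 n by rewrite mem_iota add0n ltn_ord.
  exists (f x); first by rewrite mem_iota add0n (allP Hf _ hx).
  by apply/setP => y; rewrite !inE eq_sym.
move: ilt; rewrite mem_iota /= => /Fs_ex [x fx].
exists x; first by rewrite in_setT.
by apply/setP => y; rewrite !inE fx eq_sym.
Qed.

Lemma Fs_uniq : uniq (map Fs (iota 0 ng)).
Proof.
rewrite map_inj_in_uniq ?iota_uniq // => i j; rewrite mem_iota /= => /Fs_ex [x fx] _ E.
have : x \in Fs i by rewrite inE fx.
by rewrite E inE fx => /eqP.
Qed.

Lemma sizes_ok : perm_eq [seq #|X : {set 'I_n}| | X <- enum Gs] (type_sizes t).
Proof.
have pe : perm_eq (enum Gs) (map Fs (iota 0 ng)).
  by apply: uniq_perm; rewrite ?enum_uniq ?Fs_uniq // => X; rewrite mem_enum mem_Gs.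
apply: perm_trans (perm_map _ pe) _.
rewrite -map_comp (eq_map (g := fun i => count (fun y => f y == i) (iota 0 n))) //.
by move=> i /=; rewrite card_Fs.
Qed.

Lemma card_one (x y : 'I_n) : val x < val y -> f x != f y ->
  #|[set b in Bs | (x \in b) && (y \in b)]| = 1.
Proof.
move=> xy fxy.
have := count_one xy (ltn_ord y) fxy; rewrite -size_filter.
case E : (filter _ bl) => [|s0 [|? ?]] // _.
have : s0 \in filter (fun s => (val x \in s) && (val y \in s)) bl by rewrite E inE.
rewrite mem_filter => /andP [Ps0 s0b].
rewrite -(cards1 (tos s0)); apply: eq_card => b; rewrite !inE.
apply/andP/eqP => [[/mapP [s sb ->] xys] | ->].
  have : s \in filter (fun s => (val x \in s) && (val y \in s)) bl.
    by rewrite mem_filter sb andbT; move: xys; rewrite !inE.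
  by rewrite E inE => /eqP ->.
by split; [apply: map_f | rewrite !inE].
Qed.

Theorem main_gdd : exists_4GDD t.
Proof.
exists Gs, Bs; split.
- by rewrite card_ord.
- exact: Gs_part.
- exact: sizes_ok.
split.
- case E: bl Hne => [|s0 l] // _; apply/set0Pn; exists (tos s0).
  by rewrite /Bs inE E /= inE eqxx.
- by move=> b; rewrite inE => /mapP [s sb ->]; apply: card_tos.
- move=> x y xy /eqP; rewrite pblock_eq => fxy b; rewrite inE => /mapP [s sb ->].
  rewrite !inE; case: (ltngtP (val x) (val y)) => h.
  + exact: no_same.
  + by rewrite andbC; apply: no_same => //; rewrite eq_sym.
  + by move: xy; rewrite -val_eqE h eqxx.
- move=> x y; rewrite pblock_eq => fxy.
  have xy : val x != val y by apply: contraNneq fxy => /val_inj ->.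
  case: (ltngtP (val x) (val y)) => h.
  + exact: card_one.
  + rewrite -(card_one h); last by rewrite eq_sym.
    suff -> : [set b in Bs | (x \in b) && (y \in b)] = [set b in Bs | (y \in b) && (x \in b)] by [].
    by apply/setP => b; rewrite !inE; case: (b \in _) => //=; rewrite andbC.
  + by move: xy; rewrite h eqxx.
Qed.
End Main.

Definition pt (s : nat) (p : nat * nat) : nat := 39 * p.1 + (p.2 + s) %% 39.
Definition inf (c s : nat) : nat := 312 + 3 * c + s %% 3.
Definition cblk (c s : nat) (T : seq (nat * nat)) : seq nat := rcons (map (pt s) T) (inf c s).
Definition qblk (s : nat) (Q : seq (nat * nat)) : seq nat := map (pt s) Q.
Definition devc (cls : seq (seq (seq (nat * nat)))) : seq (seq nat) :=
  flatten [seq flatten [seq map (cblk c s) (nth [::] cls c) | s <- iota 0 39] | c <- iota 0 (size cls)].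
Definition devq (qds : seq (seq (nat * nat))) : seq (seq nat) :=
  flatten [seq [seq qblk s Q | s <- iota 0 39] | Q <- qds].
Definition gf (p : nat) : nat := if p < 312 then p %/ 39 else 8.

Definition bok (m : nat) (B : seq (nat * nat)) : bool :=
  (size B == m) && uniq (map fst B) && all (fun p => (p.1 < 8) && (p.2 < 39)) B.
Definition cells : seq (nat * nat) := [seq (g, r) | g <- iota 0 8, r <- iota 0 3].
Definition cls_ok (C : seq (seq (nat * nat))) : bool :=
  all (bok 3) C && perm_eq [seq (p.1, p.2 %% 3) | p <- flatten C] cells.
Definition dl (g1 g2 : nat) (B : seq (nat * nat)) : seq nat :=
  [seq (q.2 + 39 - p.2) %% 39 | p <- [seq p <- B | p.1 == g1], q <- [seq q <- B | q.1 == g2]].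
Definition diff_ok (bb : seq (seq (nat * nat))) : bool :=
  all (fun g1 => all (fun g2 => (g1 < g2) ==>
        (sort leq (flatten [seq dl g1 g2 B | B <- bb]) == iota 0 39)) (iota 0 8)) (iota 0 8).
Definition design_ok cls qds : bool :=
  all cls_ok cls && all (bok 4) qds && diff_ok (flatten cls ++ qds).

Lemma count_flat (T : Type) (P : pred T) (L : seq (seq T)) :
  count P (flatten L) = \sum_(l <- L) count P l.
Proof. by elim: L => [|l L IH]; rewrite ?big_nil ?big_cons //= count_cat IH. Qed.

Lemma count_sum (T : Type) (P : pred T) (s : seq T) : count P s = \sum_(x <- s) P x.
Proof. by elim: s => [|x s IH]; rewrite ?big_nil ?big_cons //= IH. Qed.

Lemma count_allpairs (S T R : Type) (f : S -> T -> R) (P : pred R) s t :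
  count P [seq f x y | x <- s, y <- t] = \sum_(x <- s) count (fun y => P (f x y)) t.
Proof.
elim: s => [|x s IH]; rewrite ?big_nil ?big_cons //= count_cat IH count_map.
by [].
Qed.

Definition h (y s : nat) : nat := (y + 39 - s) %% 39.

Lemma perm_h y : y < 39 -> perm_eq (map (h y) (iota 0 39)) (iota 0 39).
Proof.
move=> hy; apply: uniq_perm; rewrite ?iota_uniq //.
  rewrite map_inj_in_uniq ?iota_uniq // => u v; rewrite !mem_iota /h => /andP [_ hu] /andP [_ hv] E.
  lia.
move=> u; rewrite [RHS]mem_iota add0n leq0n; apply/mapP/idP => [[v _ ->] | hu]; first by rewrite /h; lia.
by exists (h y u); rewrite ?mem_iota /h //=; lia.
Qed.

Lemma sum_h y (F : nat -> nat) : y < 39 ->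
  \sum_(s <- iota 0 39) F s = \sum_(s <- iota 0 39) F (h y s).
Proof. by move=> hy; rewrite -(big_map (h y) xpredT F); apply: perm_big; rewrite perm_sym perm_h. Qed.

Lemma L3 (T : seq (nat * nat)) g (Q : pred nat) :
  uniq T -> all (fun p => p.2 < 39) T ->
  \sum_(u <- iota 0 39) (((g, u) \in T) && Q u) = count (fun p => (p.1 == g) && Q p.2) T.
Proof.
elim: T => [|p T IH] /=; first by rewrite big1.
case/andP => pT uT /andP [p39 a39].
rewrite -IH //.
have -> : \sum_(u <- iota 0 39) (((g, u) \in p :: T) && Q u) =
          \sum_(u <- iota 0 39) (((g, u) == p) && Q u) + \sum_(u <- iota 0 39) (((g, u) \in T) && Q u).
  rewrite -big_split /=; apply: eq_bigr => u _; rewrite in_cons.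
  case E: ((g, u) == p); last by [].
  by move/eqP: E => E; rewrite -E in pT; rewrite (negbTE pT) /= addn0.
congr (_ + _).
rewrite (bigD1_seq p.2) ?iota_uniq ?mem_iota //= big1_seq.
  case: p p39 {pT} => a b /= _; rewrite xpair_eqE eqxx andbT addn0.
  by rewrite eq_sym.
move=> u /andP [ne _]; case: p p39 ne {pT} => a b /= _ ne.
by rewrite xpair_eqE (negbTE ne) andbF.
Qed.

Lemma L4 g1 g2 d (B : seq (nat * nat)) : uniq B -> all (fun p => p.2 < 39) B -> d < 39 ->
  count_mem d (dl g1 g2 B) = count (fun p => (p.1 == g1) && ((g2, (p.2 + d) %% 39) \in B)) B.
Proof.
move=> uB aB hd; rewrite /dl count_allpairs.
rewrite count_sum big_filter big_mkcond /=.
apply: eq_big_seq => p pB.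
have p39 : p.2 < 39 by move/allP: aB => /(_ p pB).
case: (p.1 == g1) => //=.
rewrite count_filter -(count_uniq_mem _ uB); apply: eq_in_count => q qB /=.
have q39 : q.2 < 39 by move/allP: aB => /(_ q qB).
case: q qB q39 => a b /= _ q39; rewrite xpair_eqE.
have -> : ((b + 39 - p.2) %% 39 == d) = (b == (p.2 + d) %% 39).
  by apply/eqP/eqP; lia.
by rewrite andbC.
Qed.

Lemma uniq_map_inj (T U : eqType) (f : T -> U) (s : seq T) x y :
  uniq (map f s) -> x \in s -> y \in s -> f x = f y -> x = y.
Proof.
elim: s => [|z s IH] //= /andP [nz us].
rewrite !in_cons => /orP [/eqP -> | xs] /orP [/eqP -> | ys] // E.
- by move: nz; rewrite E map_f.
- by move: nz; rewrite -E map_f.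
- exact: IH.
Qed.

Lemma bokP m B : bok m B ->
  [/\ size B = m, uniq (map fst B), uniq B, forall p, p \in B -> p.1 < 8 & forall p, p \in B -> p.2 < 39].
Proof.
case/andP => /andP [/eqP sz um] /allP al; split => //.
- exact: map_uniq um.
- by move=> p /al /andP [].
- by move=> p /al /andP [].
Qed.

Lemma bok_all39 m B : bok m B -> all (fun p => p.2 < 39) B.
Proof. by case/bokP => _ _ _ _ h; apply/allP => p /h. Qed.

Lemma pt_lt s p : p.1 < 8 -> pt s p < 312.
Proof. rewrite /pt => h1; have : (p.2 + s) %% 39 < 39 by rewrite ltn_mod. lia. Qed.

Lemma gf_pt s p : p.1 < 8 -> gf (pt s p) = p.1.
Proof. move=> h1; rewrite /gf pt_lt //; rewrite /pt; lia. Qed.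

Lemma mem_pt s B a : s < 39 -> all (fun p => p.2 < 39) B -> a < 312 ->
  (a \in map (pt s) B) = ((a %/ 39, h (a %% 39) s) \in B).
Proof.
move=> hs /allP aB ha; apply/mapP/idP => [[p pB ->] | H].
  have p39 := aB p pB.
  have -> : (pt s p %/ 39, h (pt s p %% 39) s) = p.
    by case: p pB p39 => x y /= _ y39; rewrite /pt /h /=; congr pair; lia.
  by [].
exists (a %/ 39, h (a %% 39) s) => //; rewrite /pt /h /=; lia.
Qed.

Section Design.
Variables (cls : seq (seq (seq (nat * nat)))) (qds : seq (seq (nat * nat))).
Hypothesis Hok : design_ok cls qds.
Local Notation K := (size cls).
Local Notation bl := (devc cls ++ devq qds).

Lemma clsP C : C \in cls -> cls_ok C.
Proof. by move=> CC; case/andP: Hok => /andP [/allP h _] _; apply: h. Qed.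

Lemma qdsP Q : Q \in qds -> bok 4 Q.
Proof. by move=> QQ; case/andP: Hok => /andP [_ /allP h] _; apply: h. Qed.

Lemma diffP g1 g2 : g1 < g2 < 8 ->
  sort leq (flatten [seq dl g1 g2 B | B <- flatten cls ++ qds]) = iota 0 39.
Proof.
case/andP => h12 h2; case/andP: Hok => _ /allP /(_ g1) H.
have g1i : g1 \in iota 0 8 by rewrite mem_iota; lia.
move/(_ g1i)/allP/(_ g2): H; rewrite mem_iota add0n h2 h12 => /(_ isT) /eqP //.
Qed.

Lemma nthP c T : c < K -> T \in nth [::] cls c -> bok 3 T.
Proof.
move=> cK TC; have := clsP (mem_nth [::] cK); case/andP => /allP h _; exact: h.
Qed.

Lemma mem_bl s : s \in bl ->
  (exists c sh T, [/\ c < K, sh < 39, T \in nth [::] cls c & s = cblk c sh T]) \/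
  (exists sh Q, [/\ sh < 39, Q \in qds & s = qblk sh Q]).
Proof.
rewrite mem_cat => /orP [/flattenP [l /mapP [c ci ->] /flattenP [l2 /mapP [sh shi ->] /mapP [T Ti ->]]] |
                         /flattenP [l /mapP [Q Qi ->] /mapP [sh shi ->]]].
  by left; exists c, sh, T; move: ci shi; rewrite !mem_iota; split => //; lia.
by right; exists sh, Q; move: shi; rewrite mem_iota; split => //; lia.
Qed.

Lemma count_bl (P : pred (seq nat)) :
  count P bl = \sum_(c <- iota 0 K) \sum_(sh <- iota 0 39) \sum_(T <- nth [::] cls c) P (cblk c sh T)
             + \sum_(Q <- qds) \sum_(sh <- iota 0 39) P (qblk sh Q).
Proof.
rewrite count_cat /devc /devq !count_flat !big_map; congr (_ + _).
  apply: eq_bigr => c _; rewrite count_flat big_map; apply: eq_bigr => sh _.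
  by rewrite count_map count_sum.
by apply: eq_bigr => Q _; rewrite count_map count_sum.
Qed.

Lemma FFblock a b B : a < 312 -> b < 312 -> uniq B -> all (fun p => p.2 < 39) B ->
  \sum_(sh <- iota 0 39) ((a \in map (pt sh) B) && (b \in map (pt sh) B))
  = count_mem (h (b %% 39) (a %% 39)) (dl (a %/ 39) (b %/ 39) B).
Proof.
move=> ha hb uB aB.
have y1 : a %% 39 < 39 by rewrite ltn_mod.
rewrite L4 //; last by rewrite /h ltn_mod.
rewrite -(@L3 B (a %/ 39) (fun u => (b %/ 39, (u + h (b %% 39) (a %% 39)) %% 39) \in B)) //.
rewrite (sum_h (fun sh => (a \in map (pt sh) B) && (b \in map (pt sh) B)) y1).
rewrite big_seq [RHS]big_seq; apply: eq_bigr => sh; rewrite mem_iota add0n leq0n /= => hs.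
have hs' : h (a %% 39) sh < 39 by rewrite /h ltn_mod.
rewrite !mem_pt //.
have -> : h (a %% 39) (h (a %% 39) sh) = sh by rewrite /h; lia.
have -> : h (b %% 39) (h (a %% 39) sh) = (sh + h (b %% 39) (a %% 39)) %% 39 by rewrite /h; lia.
by [].
Qed.

Lemma sum_nth (F : seq (seq (nat * nat)) -> nat) :
  \sum_(c <- iota 0 K) F (nth [::] cls c) = \sum_(C <- cls) F C.
Proof. by rewrite (big_nth [::]) /index_iota subn0. Qed.

Lemma count_FF a b : a < b -> b < 312 -> a %/ 39 < b %/ 39 ->
  count (fun s => (a \in s) && (b \in s)) bl = 1.
Proof.
move=> ab hb hg.
have ha : a < 312 by lia.
set d := h (b %% 39) (a %% 39).
have hd : d < 39 by rewrite /d /h ltn_mod.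
have g2 : b %/ 39 < 8 by lia.
transitivity (count_mem d (flatten [seq dl (a %/ 39) (b %/ 39) B | B <- flatten cls ++ qds])); last first.
  set L := flatten _.
  have pe : perm_eq (sort leq L) L by rewrite perm_sort.
  rewrite -(permP pe) /L diffP; last by rewrite hg g2.
  by rewrite count_uniq_mem ?iota_uniq // mem_iota add0n leq0n hd.
rewrite count_bl count_flat big_map big_cat big_flatten /=; congr (_ + _).
  rewrite -sum_nth big_seq [RHS]big_seq; apply: eq_bigr => c; rewrite mem_iota add0n leq0n /= => cK.
  rewrite exchange_big /= big_seq [RHS]big_seq; apply: eq_bigr => T TC.
  have [_ _ uT _ _] := bokP (nthP cK TC).
  rewrite -FFblock //; last exact: bok_all39 (nthP cK TC).
  rewrite big_seq [RHS]big_seq; apply: eq_bigr => sh _.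
  rewrite /cblk !mem_rcons !in_cons.
  have -> : (a == inf c sh) = false by apply/eqP; rewrite /inf; lia.
  have -> : (b == inf c sh) = false by apply/eqP; rewrite /inf; lia.
  by [].
rewrite big_seq [RHS]big_seq; apply: eq_bigr => Q QQ.
have [_ _ uQ _ _] := bokP (qdsP QQ).
by rewrite -FFblock //; exact: bok_all39 (qdsP QQ).
Qed.

Lemma FIblock a r0 T : a < 312 -> r0 < 3 -> uniq T -> all (fun p => p.2 < 39) T ->
  \sum_(sh <- iota 0 39) ((sh %% 3 == r0) && (a \in map (pt sh) T))
  = count (fun p => (p.1 == a %/ 39) && (p.2 %% 3 == (a %% 39 + 3 - r0) %% 3)) T.
Proof.
move=> ha hr uT aT.
have y1 : a %% 39 < 39 by rewrite ltn_mod.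
rewrite -(@L3 T (a %/ 39) (fun u => u %% 3 == (a %% 39 + 3 - r0) %% 3)) //.
rewrite (sum_h (fun sh => (sh %% 3 == r0) && (a \in map (pt sh) T)) y1).
rewrite big_seq [RHS]big_seq; apply: eq_bigr => sh; rewrite mem_iota add0n leq0n /= => hs.
have hs' : h (a %% 39) sh < 39 by rewrite /h ltn_mod.
rewrite mem_pt //.
have -> : h (a %% 39) (h (a %% 39) sh) = sh by rewrite /h; lia.
have -> : (h (a %% 39) sh %% 3 == r0) = (sh %% 3 == (a %% 39 + 3 - r0) %% 3).
  by apply/eqP/eqP; rewrite /h; lia.
by rewrite andbC.
Qed.

Lemma cells_count g r : g < 8 -> r < 3 -> count_mem (g, r) cells = 1.
Proof.
move=> hg hr; rewrite /cells count_uniq_mem.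
  rewrite (_ : (g, r) \in _ = true) //.
  by apply/allpairsP; exists (g, r); rewrite !mem_iota /=; split => //; lia.
apply: allpairs_uniq; rewrite ?iota_uniq //.
by move=> [x y] [z w] _ _ /=.
Qed.

Lemma count_FI a b : a < 312 -> 312 <= b -> b < 312 + 3 * K ->
  count (fun s => (a \in s) && (b \in s)) bl = 1.
Proof.
move=> ha hb1 hb2.
set c0 := (b - 312) %/ 3; set r0 := (b - 312) %% 3.
have c0K : c0 < K by rewrite /c0; lia.
have hr0 : r0 < 3 by rewrite /r0 ltn_mod.
rewrite count_bl.
rewrite [X in _ + X]big_seq [X in _ + X]big1 ?addn0; last first.
  move=> Q QQ; have [_ _ _ h8 _] := bokP (qdsP QQ).
  rewrite big1 // => sh _; apply/eqP; rewrite eqb0; apply/negP => /andP [_ /mapP [p pQ E]].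
  by have := pt_lt sh (h8 p pQ); lia.
rewrite (bigD1_seq c0) ?iota_uniq //; last by rewrite mem_iota; lia.
rewrite [\big[_/_]_(i <- iota 0 K | i != c0) _]big1_seq /= ?addn0; last first.
  move=> c /andP [cne ci]; rewrite big1 // => sh _; rewrite big1_seq // => T /andP [_ TC].
  have cK : c < K by move: ci; rewrite mem_iota; lia.
  have [_ _ _ h8 _] := bokP (nthP cK TC).
  rewrite /cblk !mem_rcons !in_cons.
  apply/eqP; rewrite eqb0; apply/negP => /andP [_ /orP [/eqP E | /mapP [p pT E]]].
    by move/negP: cne; apply; apply/eqP; rewrite /c0 E /inf; lia.
  by have := pt_lt sh (h8 p pT); lia.
set C0 := nth [::] cls c0.
have okC := clsP (mem_nth [::] c0K).
set rho := (a %% 39 + 3 - r0) %% 3.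
rewrite exchange_big /=.
transitivity (\sum_(T <- C0) count (fun p => (p.1 == a %/ 39) && (p.2 %% 3 == rho)) T).
  rewrite big_seq [RHS]big_seq; apply: eq_bigr => T TC.
  have [_ _ uT h8 _] := bokP (nthP c0K TC).
  rewrite -FIblock //; last exact: bok_all39 (nthP c0K TC).
  apply: eq_bigr => sh _; rewrite /cblk !mem_rcons !in_cons.
  have -> : (a == inf c0 sh) = false by apply/eqP; rewrite /inf; lia.
  have -> : (b \in map (pt sh) T) = false.
    by apply/negP => /mapP [p pT E]; have := pt_lt sh (h8 p pT); lia.
  have -> : (b == inf c0 sh) = (sh %% 3 == r0).
    by apply/eqP/eqP; rewrite /inf /r0 /c0; lia.
  by rewrite orbF andbC.
rewrite -count_flat.
transitivity (count_mem (a %/ 39, rho) [seq (p.1, p.2 %% 3) | p <- flatten C0]).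
  by rewrite count_map; apply: eq_count => p /=; rewrite xpair_eqE.
case/andP: okC => _ pe; rewrite (permP pe) cells_count //; first lia.
by rewrite /rho ltn_mod.
Qed.

Lemma bl_ok : blocks_ok (312 + 3 * K) bl.
Proof.
apply/allP => s /mem_bl [[c [sh [T [cK hs TC ->]]]] | [sh [Q [hs QQ ->]]]].
  have [sz um uT h8 h39] := bokP (nthP cK TC).
  apply/andP; split; first (apply/andP; split).
  - by rewrite size_rcons size_map sz.
  - rewrite rcons_uniq; apply/andP; split.
      by apply/mapP => [[p pT E]]; have := pt_lt sh (h8 p pT); rewrite /inf in E; lia.
    rewrite map_inj_in_uniq // => p q pT qT E.
    have := h39 p pT; have := h39 q qT; move: E.
    by case: p {pT} => x y; case: q {qT} => z w; rewrite /pt /= => E hw hy; congr pair; lia.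
  - apply/allP => x; rewrite mem_rcons in_cons => /orP [/eqP -> | /mapP [p pT ->]].
      by rewrite /inf; have := ltn_mod sh 3; lia.
    by have := pt_lt sh (h8 p pT); lia.
have [sz um uQ h8 h39] := bokP (qdsP QQ).
apply/andP; split; first (apply/andP; split).
- by rewrite size_map sz.
- rewrite map_inj_in_uniq // => p q pT qT E.
  have := h39 p pT; have := h39 q qT; move: E.
  by case: p {pT} => x y; case: q {qT} => z w; rewrite /pt /= => E hw hy; congr pair; lia.
- by apply/allP => x /mapP [p pT ->]; have := pt_lt sh (h8 p pT); lia.
Qed.

Lemma gf_inf c sh : gf (inf c sh) = 8.
Proof. by rewrite /gf (_ : (inf c sh < 312) = false) //; apply/negbTE; rewrite -leqNgt /inf; lia. Qed.

Lemma same_pt sh B a b : uniq (map fst B) -> (forall p, p \in B -> p.1 < 8) ->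
  a \in map (pt sh) B -> b \in map (pt sh) B -> gf a = gf b -> a = b.
Proof.
move=> um h8 /mapP [p pB ->] /mapP [q qB ->]; rewrite !gf_pt ?h8 // => E.
by rewrite (uniq_map_inj um pB qB E).
Qed.

Lemma no_same_bl a b s : a < b -> gf a == gf b -> s \in bl -> ~~ ((a \in s) && (b \in s)).
Proof.
move=> ab /eqP fab /mem_bl [[c [sh [T [cK hs TC ->]]]] | [sh [Q [hs QQ ->]]]];
  apply/negP => /andP [ha hb].
  have [sz um uT h8 h39] := bokP (nthP cK TC).
  move: ha hb; rewrite /cblk !mem_rcons !in_cons.
  case/orP => [/eqP ea | ha]; case/orP => [/eqP eb | hb].
  - lia.
  - by move: hb => /mapP [p pT E]; have := pt_lt sh (h8 p pT); rewrite /inf in ea; lia.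
  - move: ha fab => /mapP [p pT ->]; rewrite eb gf_inf gf_pt ?h8 // => E.
    by move: (h8 p pT); rewrite E.
  - by have := same_pt um h8 ha hb fab; lia.
have [sz um uQ h8 h39] := bokP (qdsP QQ).
by have := same_pt um h8 ha hb fab; lia.
Qed.

Lemma count_one_bl a b : a < b -> b < 312 + 3 * K -> gf a != gf b ->
  count (fun s => (a \in s) && (b \in s)) bl = 1.
Proof.
move=> ab bn.
case: (ltnP b 312) => hb.
  have ha : a < 312 by lia.
  rewrite /gf ha hb => ne; apply: count_FF => //.
  have : a %/ 39 <= b %/ 39 by apply: leq_div2r; lia.
  by rewrite leq_eqVlt (negbTE ne).
case: (ltnP a 312) => ha; last first.
  have fa : (a < 312) = false by rewrite ltnNge ha.
  have fb : (b < 312) = false by rewrite ltnNge hb.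
  by rewrite /gf fa fb.
by move=> _; apply: count_FI.
Qed.

Lemma bl_ne : bl != [::].
Proof. by have := @count_FF 0 39 isT isT isT; case: (bl). Qed.
End Design.

Lemma count_div39 i k : k <= 8 ->
  count (fun y => y %/ 39 == i) (iota 0 (39 * k)) = if i < k then 39 else 0.
Proof.
elim: k => [|k IH] hk; first by rewrite muln0.
rewrite mulnSr iotaD count_cat IH; last lia.
rewrite add0n (@eq_in_count _ _ (fun _ => k == i)); last first.
  by move=> y; rewrite mem_iota => hy; apply/eqP/eqP; lia.
have [->|ne] := eqVneq k i.
  by rewrite count_predT size_iota ltnn ltnSn.
rewrite (@eq_count _ _ pred0); last by move=> y /=; apply/negbTE.
have ne2 : (i == k) = false by apply/negbTE; rewrite eq_sym.
by rewrite count_pred0 addn0 [in RHS]ltnS [in RHS]leq_eqVlt ne2.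
Qed.

Lemma count_gf i m : count (fun y => gf y == i) (iota 0 (312 + m)) =
  if i < 8 then 39 else if i == 8 then m else 0.
Proof.
rewrite iotaD count_cat add0n.
rewrite (@eq_in_count _ _ (fun y => y %/ 39 == i) (iota 0 312)); last first.
  by move=> y; rewrite mem_iota /gf => /andP [_ hy]; rewrite ifT.
rewrite (@eq_in_count _ _ (fun y => 8 == i) (iota 312 m)); last first.
  by move=> y; rewrite mem_iota /gf => /andP [hy _]; rewrite ifF //; apply/negbTE; rewrite -leqNgt.
rewrite (count_div39 i (k := 8)) //.
case: (ltnP i 8) => hi.
  by rewrite (_ : (8 == i) = false) ?count_pred0 ?addn0 //; apply/eqP; lia.
case: (8 == i) / eqP => [<-|ne]; first by rewrite count_predT size_iota.
by rewrite count_pred0 ifF //; apply/negbTE/eqP; lia.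
Qed.


Lemma design_gdd cls qds t : design_ok cls qds -> 0 < size cls ->
  type_points t = 312 + 3 * size cls ->
  perm_eq [seq (if i < 8 then 39 else if i == 8 then 3 * size cls else 0) | i <- iota 0 9] (type_sizes t) ->
  exists_4GDD t.
Proof.
move=> ok K0 tp ts.
apply: (@main_gdd t gf 9 (devc cls ++ devq qds)); rewrite ?tp.
- exact: bl_ok.
- exact: bl_ne.
- by move=> a b ab bn ne; apply: count_one_bl.
- by move=> a b s ab fab sb; exact: (no_same_bl ok ab fab sb).
- by apply/allP => x _; rewrite /gf; case: (ltnP x 312) => h /=; lia.
- apply/allP => i; rewrite mem_iota => /andP [_ hi]; apply/hasP.
  case: (ltnP i 8) => hi8.
    exists (39 * i); first by rewrite mem_iota; lia.
    by rewrite /gf (_ : 39 * i < 312); [apply/eqP; lia | lia].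
  exists 312; first by rewrite mem_iota; lia.
  by rewrite /gf ltnn; apply/eqP; lia.
- by rewrite (eq_map (fun i => count_gf i (3 * size cls))).
Qed.
Definition cls40 : seq (seq (seq (nat*nat))) :=
  [:: [:: [:: (3,0); (5,27); (4,20)]; [:: (0,0); (5,14); (1,7)]; [:: (4,13); (2,15); (1,30)]; [:: (2,13); (6,14); (4,18)]; [:: (0,26); (1,14); (3,2)]; [:: (6,0); (5,4); (7,6)]; [:: (2,26); (7,1); (6,16)]; [:: (0,13); (3,1); (7,2)]];
     [:: [:: (3,0); (5,21); (4,17)]; [:: (0,0); (5,8); (1,4)]; [:: (4,13); (2,3); (1,6)]; [:: (2,13); (6,8); (4,27)]; [:: (0,26); (1,8); (3,29)]; [:: (6,0); (5,19); (7,9)]; [:: (2,26); (7,34); (6,37)]; [:: (0,13); (3,34); (7,29)]];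
     [:: [:: (3,0); (5,12); (4,32)]; [:: (0,0); (5,38); (1,19)]; [:: (4,13); (2,24); (1,9)]; [:: (2,13); (6,38); (4,21)]; [:: (0,26); (1,38); (3,11)]; [:: (6,0); (5,22); (7,33)]; [:: (2,26); (7,25); (6,10)]; [:: (0,13); (3,25); (7,11)]];
     [:: [:: (3,0); (5,18); (4,35)]; [:: (0,0); (5,5); (1,22)]; [:: (4,13); (2,36); (1,33)]; [:: (2,13); (6,5); (4,12)]; [:: (0,26); (1,5); (3,23)]; [:: (6,0); (5,7); (7,30)]; [:: (2,26); (7,31); (6,28)]; [:: (0,13); (3,31); (7,23)]];
     [:: [:: (4,0); (6,27); (5,20)]; [:: (1,0); (6,14); (2,4)]; [:: (5,13); (3,15); (2,30)]; [:: (3,13); (0,2); (5,18)]; [:: (1,26); (2,17); (4,2)]; [:: (0,0); (6,1); (7,3)]; [:: (3,26); (7,1); (0,31)]; [:: (1,13); (4,1); (7,5)]];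
     [:: [:: (4,0); (6,21); (5,17)]; [:: (1,0); (6,8); (2,19)]; [:: (5,13); (3,3); (2,6)]; [:: (3,13); (0,29); (5,27)]; [:: (1,26); (2,32); (4,29)]; [:: (0,0); (6,34); (7,24)]; [:: (3,26); (7,34); (0,1)]; [:: (1,13); (4,34); (7,14)]];
     [:: [:: (4,0); (6,12); (5,32)]; [:: (1,0); (6,38); (2,22)]; [:: (5,13); (3,24); (2,9)]; [:: (3,13); (0,11); (5,21)]; [:: (1,26); (2,35); (4,11)]; [:: (0,0); (6,25); (7,36)]; [:: (3,26); (7,25); (0,34)]; [:: (1,13); (4,25); (7,8)]];
     [:: [:: (4,0); (6,18); (5,35)]; [:: (1,0); (6,5); (2,7)]; [:: (5,13); (3,36); (2,33)]; [:: (3,13); (0,23); (5,12)]; [:: (1,26); (2,20); (4,23)]; [:: (0,0); (6,31); (7,15)]; [:: (3,26); (7,31); (0,25)]; [:: (1,13); (4,31); (7,38)]];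
     [:: [:: (5,0); (0,27); (6,5)]; [:: (2,0); (0,14); (3,31)]; [:: (6,13); (4,27); (3,18)]; [:: (4,13); (1,17); (6,27)]; [:: (2,26); (3,14); (5,17)]; [:: (1,0); (0,28); (7,27)]; [:: (4,26); (7,1); (1,16)]; [:: (2,13); (5,1); (7,20)]];
     [:: [:: (5,0); (0,21); (6,14)]; [:: (2,0); (0,8); (3,1)]; [:: (6,13); (4,21); (3,27)]; [:: (4,13); (1,32); (6,21)]; [:: (2,26); (3,8); (5,32)]; [:: (1,0); (0,16); (7,21)]; [:: (4,26); (7,34); (1,37)]; [:: (2,13); (5,34); (7,17)]];
     [:: [:: (5,0); (0,12); (6,8)]; [:: (2,0); (0,38); (3,34)]; [:: (6,13); (4,12); (3,21)]; [:: (4,13); (1,35); (6,12)]; [:: (2,26); (3,38); (5,35)]; [:: (1,0); (0,37); (7,12)]; [:: (4,26); (7,25); (1,10)]; [:: (2,13); (5,25); (7,32)]];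
     [:: [:: (5,0); (0,18); (6,38)]; [:: (2,0); (0,5); (3,25)]; [:: (6,13); (4,18); (3,12)]; [:: (4,13); (1,20); (6,18)]; [:: (2,26); (3,5); (5,20)]; [:: (1,0); (0,10); (7,18)]; [:: (4,26); (7,31); (1,28)]; [:: (2,13); (5,31); (7,35)]];
     [:: [:: (6,0); (1,27); (0,29)]; [:: (3,0); (1,17); (4,1)]; [:: (0,13); (5,15); (4,21)]; [:: (5,13); (2,14); (0,30)]; [:: (3,26); (4,14); (6,29)]; [:: (2,0); (1,28); (7,30)]; [:: (5,26); (7,4); (2,16)]; [:: (3,13); (6,1); (7,20)]];
     [:: [:: (6,0); (1,21); (0,11)]; [:: (3,0); (1,32); (4,34)]; [:: (0,13); (5,3); (4,12)]; [:: (5,13); (2,8); (0,6)]; [:: (3,26); (4,8); (6,11)]; [:: (2,0); (1,16); (7,6)]; [:: (5,26); (7,19); (2,37)]; [:: (3,13); (6,34); (7,17)]];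
     [:: [:: (6,0); (1,12); (0,23)]; [:: (3,0); (1,35); (4,25)]; [:: (0,13); (5,24); (4,18)]; [:: (5,13); (2,38); (0,9)]; [:: (3,26); (4,38); (6,23)]; [:: (2,0); (1,37); (7,9)]; [:: (5,26); (7,22); (2,10)]; [:: (3,13); (6,25); (7,32)]];
     [:: [:: (6,0); (1,18); (0,2)]; [:: (3,0); (1,20); (4,31)]; [:: (0,13); (5,36); (4,27)]; [:: (5,13); (2,5); (0,33)]; [:: (3,26); (4,5); (6,2)]; [:: (2,0); (1,10); (7,33)]; [:: (5,26); (7,7); (2,28)]; [:: (3,13); (6,31); (7,35)]];
     [:: [:: (0,0); (2,27); (1,17)]; [:: (4,0); (2,17); (5,1)]; [:: (1,13); (6,15); (5,30)]; [:: (6,13); (3,14); (1,6)]; [:: (4,26); (5,14); (0,17)]; [:: (3,0); (2,1); (7,30)]; [:: (6,26); (7,1); (3,19)]; [:: (4,13); (0,28); (7,14)]];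
     [:: [:: (0,0); (2,21); (1,32)]; [:: (4,0); (2,32); (5,34)]; [:: (1,13); (6,3); (5,6)]; [:: (6,13); (3,8); (1,9)]; [:: (4,26); (5,8); (0,32)]; [:: (3,0); (2,34); (7,6)]; [:: (6,26); (7,34); (3,22)]; [:: (4,13); (0,16); (7,8)]];
     [:: [:: (0,0); (2,12); (1,35)]; [:: (4,0); (2,35); (5,25)]; [:: (1,13); (6,24); (5,9)]; [:: (6,13); (3,38); (1,33)]; [:: (4,26); (5,38); (0,35)]; [:: (3,0); (2,25); (7,9)]; [:: (6,26); (7,25); (3,7)]; [:: (4,13); (0,37); (7,38)]];
     [:: [:: (0,0); (2,18); (1,20)]; [:: (4,0); (2,20); (5,31)]; [:: (1,13); (6,36); (5,33)]; [:: (6,13); (3,5); (1,30)]; [:: (4,26); (5,5); (0,20)]; [:: (3,0); (2,31); (7,33)]; [:: (6,26); (7,31); (3,4)]; [:: (4,13); (0,10); (7,5)]];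
     [:: [:: (1,0); (3,15); (2,17)]; [:: (5,0); (3,14); (6,31)]; [:: (2,13); (0,15); (6,6)]; [:: (0,13); (4,17); (2,27)]; [:: (5,26); (6,17); (1,8)]; [:: (4,0); (3,1); (7,18)]; [:: (0,26); (7,28); (4,4)]; [:: (5,13); (1,4); (7,8)]];
     [:: [:: (1,0); (3,3); (2,32)]; [:: (5,0); (3,8); (6,1)]; [:: (2,13); (0,3); (6,9)]; [:: (0,13); (4,32); (2,21)]; [:: (5,26); (6,32); (1,38)]; [:: (4,0); (3,34); (7,27)]; [:: (0,26); (7,16); (4,19)]; [:: (5,13); (1,19); (7,38)]];
     [:: [:: (1,0); (3,24); (2,35)]; [:: (5,0); (3,38); (6,34)]; [:: (2,13); (0,24); (6,33)]; [:: (0,13); (4,35); (2,12)]; [:: (5,26); (6,35); (1,5)]; [:: (4,0); (3,25); (7,21)]; [:: (0,26); (7,37); (4,22)]; [:: (5,13); (1,22); (7,5)]];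
     [:: [:: (1,0); (3,36); (2,20)]; [:: (5,0); (3,5); (6,25)]; [:: (2,13); (0,36); (6,30)]; [:: (0,13); (4,20); (2,18)]; [:: (5,26); (6,20); (1,14)]; [:: (4,0); (3,31); (7,12)]; [:: (0,26); (7,10); (4,7)]; [:: (5,13); (1,7); (7,14)]];
     [:: [:: (2,0); (4,27); (3,17)]; [:: (6,0); (4,2); (0,1)]; [:: (3,13); (1,27); (0,3)]; [:: (1,13); (5,14); (3,30)]; [:: (6,26); (0,2); (2,17)]; [:: (5,0); (4,1); (7,18)]; [:: (1,26); (7,1); (5,31)]; [:: (6,13); (2,28); (7,14)]];
     [:: [:: (2,0); (4,21); (3,32)]; [:: (6,0); (4,29); (0,34)]; [:: (3,13); (1,21); (0,24)]; [:: (1,13); (5,8); (3,6)]; [:: (6,26); (0,29); (2,32)]; [:: (5,0); (4,34); (7,27)]; [:: (1,26); (7,34); (5,1)]; [:: (6,13); (2,16); (7,8)]];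
     [:: [:: (2,0); (4,12); (3,35)]; [:: (6,0); (4,11); (0,25)]; [:: (3,13); (1,12); (0,36)]; [:: (1,13); (5,38); (3,9)]; [:: (6,26); (0,11); (2,35)]; [:: (5,0); (4,25); (7,21)]; [:: (1,26); (7,25); (5,34)]; [:: (6,13); (2,37); (7,38)]];
     [:: [:: (2,0); (4,18); (3,20)]; [:: (6,0); (4,23); (0,31)]; [:: (3,13); (1,18); (0,15)]; [:: (1,13); (5,5); (3,33)]; [:: (6,26); (0,23); (2,20)]; [:: (5,0); (4,31); (7,12)]; [:: (1,26); (7,31); (5,25)]; [:: (6,13); (2,10); (7,5)]];
     [:: [:: (0,0); (1,30); (6,27)]; [:: (0,26); (1,1); (3,30)]; [:: (2,0); (3,2); (4,6)]; [:: (2,26); (5,4); (7,2)]; [:: (1,26); (5,15); (6,4)]; [:: (2,13); (4,14); (7,30)]; [:: (0,13); (3,4); (4,1)]; [:: (5,26); (6,14); (7,31)]];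
     [:: [:: (0,0); (1,6); (6,21)]; [:: (0,26); (1,34); (3,6)]; [:: (2,0); (3,29); (4,9)]; [:: (2,26); (5,19); (7,29)]; [:: (1,26); (5,3); (6,19)]; [:: (2,13); (4,8); (7,6)]; [:: (0,13); (3,19); (4,34)]; [:: (5,26); (6,8); (7,1)]];
     [:: [:: (0,0); (1,9); (6,12)]; [:: (0,26); (1,25); (3,9)]; [:: (2,0); (3,11); (4,33)]; [:: (2,26); (5,22); (7,11)]; [:: (1,26); (5,24); (6,22)]; [:: (2,13); (4,38); (7,9)]; [:: (0,13); (3,22); (4,25)]; [:: (5,26); (6,38); (7,34)]];
     [:: [:: (0,0); (1,33); (6,18)]; [:: (0,26); (1,31); (3,33)]; [:: (2,0); (3,23); (4,30)]; [:: (2,26); (5,7); (7,23)]; [:: (1,26); (5,36); (6,7)]; [:: (2,13); (4,5); (7,33)]; [:: (0,13); (3,7); (4,31)]; [:: (5,26); (6,5); (7,25)]];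
     [:: [:: (1,0); (2,27); (6,31)]; [:: (1,26); (2,1); (4,18)]; [:: (0,0); (4,2); (5,30)]; [:: (0,26); (3,1); (7,4)]; [:: (2,26); (3,30); (6,14)]; [:: (0,13); (5,14); (7,17)]; [:: (1,13); (4,4); (5,28)]; [:: (3,26); (6,15); (7,3)]];
     [:: [:: (1,0); (2,21); (6,1)]; [:: (1,26); (2,34); (4,27)]; [:: (0,0); (4,29); (5,6)]; [:: (0,26); (3,34); (7,19)]; [:: (2,26); (3,6); (6,8)]; [:: (0,13); (5,8); (7,32)]; [:: (1,13); (4,19); (5,16)]; [:: (3,26); (6,3); (7,24)]];
     [:: [:: (1,0); (2,12); (6,34)]; [:: (1,26); (2,25); (4,21)]; [:: (0,0); (4,11); (5,9)]; [:: (0,26); (3,25); (7,22)]; [:: (2,26); (3,9); (6,38)]; [:: (0,13); (5,38); (7,35)]; [:: (1,13); (4,22); (5,37)]; [:: (3,26); (6,24); (7,36)]];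
     [:: [:: (1,0); (2,18); (6,25)]; [:: (1,26); (2,31); (4,12)]; [:: (0,0); (4,23); (5,33)]; [:: (0,26); (3,31); (7,7)]; [:: (2,26); (3,33); (6,5)]; [:: (0,13); (5,5); (7,20)]; [:: (1,13); (4,7); (5,10)]; [:: (3,26); (6,36); (7,15)]];
     [:: [:: (2,0); (0,30); (6,14)]; [:: (2,26); (0,4); (5,21)]; [:: (1,0); (5,2); (3,6)]; [:: (1,26); (4,1); (7,3)]; [:: (0,26); (4,15); (6,6)]; [:: (1,13); (3,2); (7,4)]; [:: (2,13); (5,28); (3,19)]; [:: (4,26); (6,28); (7,17)]];
     [:: [:: (2,0); (0,6); (6,8)]; [:: (2,26); (0,19); (5,12)]; [:: (1,0); (5,29); (3,9)]; [:: (1,26); (4,34); (7,24)]; [:: (0,26); (4,3); (6,9)]; [:: (1,13); (3,29); (7,19)]; [:: (2,13); (5,16); (3,22)]; [:: (4,26); (6,16); (7,32)]];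
     [:: [:: (2,0); (0,9); (6,38)]; [:: (2,26); (0,22); (5,18)]; [:: (1,0); (5,11); (3,33)]; [:: (1,26); (4,25); (7,36)]; [:: (0,26); (4,24); (6,33)]; [:: (1,13); (3,11); (7,22)]; [:: (2,13); (5,37); (3,7)]; [:: (4,26); (6,37); (7,35)]];
     [:: [:: (2,0); (0,33); (6,5)]; [:: (2,26); (0,7); (5,27)]; [:: (1,0); (5,23); (3,30)]; [:: (1,26); (4,31); (7,15)]; [:: (0,26); (4,36); (6,30)]; [:: (1,13); (3,23); (7,7)]; [:: (2,13); (5,10); (3,4)]; [:: (4,26); (6,10); (7,20)]]].

Definition qds40 : seq (seq (nat*nat)) :=
  [:: [:: (0,0); (1,1); (2,32); (7,21)];
     [:: (0,0); (1,34); (2,35); (7,12)];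
     [:: (0,0); (1,25); (2,20); (7,18)];
     [:: (0,0); (1,31); (2,17); (7,27)];
     [:: (3,0); (4,2); (5,4); (6,6)];
     [:: (3,0); (4,29); (5,19); (6,9)];
     [:: (3,0); (4,11); (5,22); (6,33)];
     [:: (3,0); (4,23); (5,7); (6,30)];
     [:: (0,0); (1,0); (2,0); (3,0)];
     [:: (0,0); (1,13); (2,26); (4,0)];
     [:: (0,0); (1,26); (5,0); (6,0)];
     [:: (0,0); (3,13); (4,26); (5,13)];
     [:: (0,0); (4,13); (5,26); (7,0)];
     [:: (0,0); (3,26); (6,13); (7,26)];
     [:: (0,0); (2,13); (6,26); (7,13)];
     [:: (1,0); (2,26); (5,26); (7,13)];
     [:: (2,0); (3,13); (4,0); (6,26)];
     [:: (1,0); (4,0); (6,0); (7,0)];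
     [:: (1,0); (3,13); (4,13); (7,26)];
     [:: (1,0); (3,26); (5,0); (6,26)];
     [:: (2,0); (3,26); (5,13); (7,13)];
     [:: (2,0); (4,26); (5,26); (6,0)]].

Definition cls41 : seq (seq (seq (nat*nat))) :=
  [:: [:: [:: (3,0); (5,27); (4,20)]; [:: (0,0); (5,14); (1,7)]; [:: (4,13); (2,15); (1,30)]; [:: (2,13); (6,14); (4,18)]; [:: (0,26); (1,14); (3,2)]; [:: (6,0); (5,4); (7,6)]; [:: (2,26); (7,1); (6,16)]; [:: (0,13); (3,1); (7,2)]];
     [:: [:: (3,0); (5,21); (4,17)]; [:: (0,0); (5,8); (1,4)]; [:: (4,13); (2,3); (1,6)]; [:: (2,13); (6,8); (4,27)]; [:: (0,26); (1,8); (3,29)]; [:: (6,0); (5,19); (7,9)]; [:: (2,26); (7,34); (6,37)]; [:: (0,13); (3,34); (7,29)]];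
     [:: [:: (3,0); (5,12); (4,32)]; [:: (0,0); (5,38); (1,19)]; [:: (4,13); (2,24); (1,9)]; [:: (2,13); (6,38); (4,21)]; [:: (0,26); (1,38); (3,11)]; [:: (6,0); (5,22); (7,33)]; [:: (2,26); (7,25); (6,10)]; [:: (0,13); (3,25); (7,11)]];
     [:: [:: (3,0); (5,18); (4,35)]; [:: (0,0); (5,5); (1,22)]; [:: (4,13); (2,36); (1,33)]; [:: (2,13); (6,5); (4,12)]; [:: (0,26); (1,5); (3,23)]; [:: (6,0); (5,7); (7,30)]; [:: (2,26); (7,31); (6,28)]; [:: (0,13); (3,31); (7,23)]];
     [:: [:: (4,0); (6,27); (5,20)]; [:: (1,0); (6,14); (2,4)]; [:: (5,13); (3,15); (2,30)]; [:: (3,13); (0,2); (5,18)]; [:: (1,26); (2,17); (4,2)]; [:: (0,0); (6,1); (7,3)]; [:: (3,26); (7,1); (0,31)]; [:: (1,13); (4,1); (7,5)]];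
     [:: [:: (4,0); (6,21); (5,17)]; [:: (1,0); (6,8); (2,19)]; [:: (5,13); (3,3); (2,6)]; [:: (3,13); (0,29); (5,27)]; [:: (1,26); (2,32); (4,29)]; [:: (0,0); (6,34); (7,24)]; [:: (3,26); (7,34); (0,1)]; [:: (1,13); (4,34); (7,14)]];
     [:: [:: (4,0); (6,12); (5,32)]; [:: (1,0); (6,38); (2,22)]; [:: (5,13); (3,24); (2,9)]; [:: (3,13); (0,11); (5,21)]; [:: (1,26); (2,35); (4,11)]; [:: (0,0); (6,25); (7,36)]; [:: (3,26); (7,25); (0,34)]; [:: (1,13); (4,25); (7,8)]];
     [:: [:: (4,0); (6,18); (5,35)]; [:: (1,0); (6,5); (2,7)]; [:: (5,13); (3,36); (2,33)]; [:: (3,13); (0,23); (5,12)]; [:: (1,26); (2,20); (4,23)]; [:: (0,0); (6,31); (7,15)]; [:: (3,26); (7,31); (0,25)]; [:: (1,13); (4,31); (7,38)]];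
     [:: [:: (5,0); (0,27); (6,5)]; [:: (2,0); (0,14); (3,31)]; [:: (6,13); (4,27); (3,18)]; [:: (4,13); (1,17); (6,27)]; [:: (2,26); (3,14); (5,17)]; [:: (1,0); (0,28); (7,27)]; [:: (4,26); (7,1); (1,16)]; [:: (2,13); (5,1); (7,20)]];
     [:: [:: (5,0); (0,21); (6,14)]; [:: (2,0); (0,8); (3,1)]; [:: (6,13); (4,21); (3,27)]; [:: (4,13); (1,32); (6,21)]; [:: (2,26); (3,8); (5,32)]; [:: (1,0); (0,16); (7,21)]; [:: (4,26); (7,34); (1,37)]; [:: (2,13); (5,34); (7,17)]];
     [:: [:: (5,0); (0,12); (6,8)]; [:: (2,0); (0,38); (3,34)]; [:: (6,13); (4,12); (3,21)]; [:: (4,13); (1,35); (6,12)]; [:: (2,26); (3,38); (5,35)]; [:: (1,0); (0,37); (7,12)]; [:: (4,26); (7,25); (1,10)]; [:: (2,13); (5,25); (7,32)]];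
     [:: [:: (5,0); (0,18); (6,38)]; [:: (2,0); (0,5); (3,25)]; [:: (6,13); (4,18); (3,12)]; [:: (4,13); (1,20); (6,18)]; [:: (2,26); (3,5); (5,20)]; [:: (1,0); (0,10); (7,18)]; [:: (4,26); (7,31); (1,28)]; [:: (2,13); (5,31); (7,35)]];
     [:: [:: (6,0); (1,27); (0,29)]; [:: (3,0); (1,17); (4,1)]; [:: (0,13); (5,15); (4,21)]; [:: (5,13); (2,14); (0,30)]; [:: (3,26); (4,14); (6,29)]; [:: (2,0); (1,28); (7,30)]; [:: (5,26); (7,4); (2,16)]; [:: (3,13); (6,1); (7,20)]];
     [:: [:: (6,0); (1,21); (0,11)]; [:: (3,0); (1,32); (4,34)]; [:: (0,13); (5,3); (4,12)]; [:: (5,13); (2,8); (0,6)]; [:: (3,26); (4,8); (6,11)]; [:: (2,0); (1,16); (7,6)]; [:: (5,26); (7,19); (2,37)]; [:: (3,13); (6,34); (7,17)]];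
     [:: [:: (6,0); (1,12); (0,23)]; [:: (3,0); (1,35); (4,25)]; [:: (0,13); (5,24); (4,18)]; [:: (5,13); (2,38); (0,9)]; [:: (3,26); (4,38); (6,23)]; [:: (2,0); (1,37); (7,9)]; [:: (5,26); (7,22); (2,10)]; [:: (3,13); (6,25); (7,32)]];
     [:: [:: (6,0); (1,18); (0,2)]; [:: (3,0); (1,20); (4,31)]; [:: (0,13); (5,36); (4,27)]; [:: (5,13); (2,5); (0,33)]; [:: (3,26); (4,5); (6,2)]; [:: (2,0); (1,10); (7,33)]; [:: (5,26); (7,7); (2,28)]; [:: (3,13); (6,31); (7,35)]];
     [:: [:: (0,0); (2,27); (1,17)]; [:: (4,0); (2,17); (5,1)]; [:: (1,13); (6,15); (5,30)]; [:: (6,13); (3,14); (1,6)]; [:: (4,26); (5,14); (0,17)]; [:: (3,0); (2,1); (7,30)]; [:: (6,26); (7,1); (3,19)]; [:: (4,13); (0,28); (7,14)]];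
     [:: [:: (0,0); (2,21); (1,32)]; [:: (4,0); (2,32); (5,34)]; [:: (1,13); (6,3); (5,6)]; [:: (6,13); (3,8); (1,9)]; [:: (4,26); (5,8); (0,32)]; [:: (3,0); (2,34); (7,6)]; [:: (6,26); (7,34); (3,22)]; [:: (4,13); (0,16); (7,8)]];
     [:: [:: (0,0); (2,12); (1,35)]; [:: (4,0); (2,35); (5,25)]; [:: (1,13); (6,24); (5,9)]; [:: (6,13); (3,38); (1,33)]; [:: (4,26); (5,38); (0,35)]; [:: (3,0); (2,25); (7,9)]; [:: (6,26); (7,25); (3,7)]; [:: (4,13); (0,37); (7,38)]];
     [:: [:: (0,0); (2,18); (1,20)]; [:: (4,0); (2,20); (5,31)]; [:: (1,13); (6,36); (5,33)]; [:: (6,13); (3,5); (1,30)]; [:: (4,26); (5,5); (0,20)]; [:: (3,0); (2,31); (7,33)]; [:: (6,26); (7,31); (3,4)]; [:: (4,13); (0,10); (7,5)]];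
     [:: [:: (1,0); (3,15); (2,17)]; [:: (5,0); (3,14); (6,31)]; [:: (2,13); (0,15); (6,6)]; [:: (0,13); (4,17); (2,27)]; [:: (5,26); (6,17); (1,8)]; [:: (4,0); (3,1); (7,18)]; [:: (0,26); (7,28); (4,4)]; [:: (5,13); (1,4); (7,8)]];
     [:: [:: (1,0); (3,3); (2,32)]; [:: (5,0); (3,8); (6,1)]; [:: (2,13); (0,3); (6,9)]; [:: (0,13); (4,32); (2,21)]; [:: (5,26); (6,32); (1,38)]; [:: (4,0); (3,34); (7,27)]; [:: (0,26); (7,16); (4,19)]; [:: (5,13); (1,19); (7,38)]];
     [:: [:: (1,0); (3,24); (2,35)]; [:: (5,0); (3,38); (6,34)]; [:: (2,13); (0,24); (6,33)]; [:: (0,13); (4,35); (2,12)]; [:: (5,26); (6,35); (1,5)]; [:: (4,0); (3,25); (7,21)]; [:: (0,26); (7,37); (4,22)]; [:: (5,13); (1,22); (7,5)]];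
     [:: [:: (1,0); (3,36); (2,20)]; [:: (5,0); (3,5); (6,25)]; [:: (2,13); (0,36); (6,30)]; [:: (0,13); (4,20); (2,18)]; [:: (5,26); (6,20); (1,14)]; [:: (4,0); (3,31); (7,12)]; [:: (0,26); (7,10); (4,7)]; [:: (5,13); (1,7); (7,14)]];
     [:: [:: (2,0); (4,27); (3,17)]; [:: (6,0); (4,2); (0,1)]; [:: (3,13); (1,27); (0,3)]; [:: (1,13); (5,14); (3,30)]; [:: (6,26); (0,2); (2,17)]; [:: (5,0); (4,1); (7,18)]; [:: (1,26); (7,1); (5,31)]; [:: (6,13); (2,28); (7,14)]];
     [:: [:: (2,0); (4,21); (3,32)]; [:: (6,0); (4,29); (0,34)]; [:: (3,13); (1,21); (0,24)]; [:: (1,13); (5,8); (3,6)]; [:: (6,26); (0,29); (2,32)]; [:: (5,0); (4,34); (7,27)]; [:: (1,26); (7,34); (5,1)]; [:: (6,13); (2,16); (7,8)]];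
     [:: [:: (2,0); (4,12); (3,35)]; [:: (6,0); (4,11); (0,25)]; [:: (3,13); (1,12); (0,36)]; [:: (1,13); (5,38); (3,9)]; [:: (6,26); (0,11); (2,35)]; [:: (5,0); (4,25); (7,21)]; [:: (1,26); (7,25); (5,34)]; [:: (6,13); (2,37); (7,38)]];
     [:: [:: (2,0); (4,18); (3,20)]; [:: (6,0); (4,23); (0,31)]; [:: (3,13); (1,18); (0,15)]; [:: (1,13); (5,5); (3,33)]; [:: (6,26); (0,23); (2,20)]; [:: (5,0); (4,31); (7,12)]; [:: (1,26); (7,31); (5,25)]; [:: (6,13); (2,10); (7,5)]];
     [:: [:: (0,0); (1,30); (6,27)]; [:: (0,26); (1,1); (3,30)]; [:: (2,0); (3,2); (4,6)]; [:: (2,26); (5,4); (7,2)]; [:: (1,26); (5,15); (6,4)]; [:: (2,13); (4,14); (7,30)]; [:: (0,13); (3,4); (4,1)]; [:: (5,26); (6,14); (7,31)]];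
     [:: [:: (0,0); (1,6); (6,21)]; [:: (0,26); (1,34); (3,6)]; [:: (2,0); (3,29); (4,9)]; [:: (2,26); (5,19); (7,29)]; [:: (1,26); (5,3); (6,19)]; [:: (2,13); (4,8); (7,6)]; [:: (0,13); (3,19); (4,34)]; [:: (5,26); (6,8); (7,1)]];
     [:: [:: (0,0); (1,9); (6,12)]; [:: (0,26); (1,25); (3,9)]; [:: (2,0); (3,11); (4,33)]; [:: (2,26); (5,22); (7,11)]; [:: (1,26); (5,24); (6,22)]; [:: (2,13); (4,38); (7,9)]; [:: (0,13); (3,22); (4,25)]; [:: (5,26); (6,38); (7,34)]];
     [:: [:: (0,0); (1,33); (6,18)]; [:: (0,26); (1,31); (3,33)]; [:: (2,0); (3,23); (4,30)]; [:: (2,26); (5,7); (7,23)]; [:: (1,26); (5,36); (6,7)]; [:: (2,13); (4,5); (7,33)]; [:: (0,13); (3,7); (4,31)]; [:: (5,26); (6,5); (7,25)]];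
     [:: [:: (1,0); (2,27); (6,31)]; [:: (1,26); (2,1); (4,18)]; [:: (0,0); (4,2); (5,30)]; [:: (0,26); (3,1); (7,4)]; [:: (2,26); (3,30); (6,14)]; [:: (0,13); (5,14); (7,17)]; [:: (1,13); (4,4); (5,28)]; [:: (3,26); (6,15); (7,3)]];
     [:: [:: (1,0); (2,21); (6,1)]; [:: (1,26); (2,34); (4,27)]; [:: (0,0); (4,29); (5,6)]; [:: (0,26); (3,34); (7,19)]; [:: (2,26); (3,6); (6,8)]; [:: (0,13); (5,8); (7,32)]; [:: (1,13); (4,19); (5,16)]; [:: (3,26); (6,3); (7,24)]];
     [:: [:: (1,0); (2,12); (6,34)]; [:: (1,26); (2,25); (4,21)]; [:: (0,0); (4,11); (5,9)]; [:: (0,26); (3,25); (7,22)]; [:: (2,26); (3,9); (6,38)]; [:: (0,13); (5,38); (7,35)]; [:: (1,13); (4,22); (5,37)]; [:: (3,26); (6,24); (7,36)]];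
     [:: [:: (1,0); (2,18); (6,25)]; [:: (1,26); (2,31); (4,12)]; [:: (0,0); (4,23); (5,33)]; [:: (0,26); (3,31); (7,7)]; [:: (2,26); (3,33); (6,5)]; [:: (0,13); (5,5); (7,20)]; [:: (1,13); (4,7); (5,10)]; [:: (3,26); (6,36); (7,15)]];
     [:: [:: (2,0); (0,30); (6,14)]; [:: (2,26); (0,4); (5,21)]; [:: (1,0); (5,2); (3,6)]; [:: (1,26); (4,1); (7,3)]; [:: (0,26); (4,15); (6,6)]; [:: (1,13); (3,2); (7,4)]; [:: (2,13); (5,28); (3,19)]; [:: (4,26); (6,28); (7,17)]];
     [:: [:: (2,0); (0,6); (6,8)]; [:: (2,26); (0,19); (5,12)]; [:: (1,0); (5,29); (3,9)]; [:: (1,26); (4,34); (7,24)]; [:: (0,26); (4,3); (6,9)]; [:: (1,13); (3,29); (7,19)]; [:: (2,13); (5,16); (3,22)]; [:: (4,26); (6,16); (7,32)]];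
     [:: [:: (2,0); (0,9); (6,38)]; [:: (2,26); (0,22); (5,18)]; [:: (1,0); (5,11); (3,33)]; [:: (1,26); (4,25); (7,36)]; [:: (0,26); (4,24); (6,33)]; [:: (1,13); (3,11); (7,22)]; [:: (2,13); (5,37); (3,7)]; [:: (4,26); (6,37); (7,35)]];
     [:: [:: (2,0); (0,33); (6,5)]; [:: (2,26); (0,7); (5,27)]; [:: (1,0); (5,23); (3,30)]; [:: (1,26); (4,31); (7,15)]; [:: (0,26); (4,36); (6,30)]; [:: (1,13); (3,23); (7,7)]; [:: (2,13); (5,10); (3,4)]; [:: (4,26); (6,10); (7,20)]];
     [:: [:: (5,0); (7,26); (4,26)]; [:: (0,13); (3,0); (6,26)]; [:: (6,0); (5,26); (3,26)]; [:: (0,0); (1,26); (4,13)]; [:: (4,0); (7,13); (3,13)]; [:: (2,0); (6,13); (1,13)]; [:: (1,0); (2,13); (5,13)]; [:: (2,26); (7,0); (0,26)]]].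

Definition qds41 : seq (seq (nat*nat)) :=
  [:: [:: (0,0); (1,1); (2,32); (7,21)];
     [:: (0,0); (1,34); (2,35); (7,12)];
     [:: (0,0); (1,25); (2,20); (7,18)];
     [:: (0,0); (1,31); (2,17); (7,27)];
     [:: (3,0); (4,2); (5,4); (6,6)];
     [:: (3,0); (4,29); (5,19); (6,9)];
     [:: (3,0); (4,11); (5,22); (6,33)];
     [:: (3,0); (4,23); (5,7); (6,30)];
     [:: (0,0); (1,13); (3,0); (7,26)];
     [:: (0,0); (4,26); (5,13); (6,0)];
     [:: (1,0); (4,13); (6,13); (7,0)];
     [:: (1,0); (2,0); (3,0); (4,0)];
     [:: (0,0); (1,0); (3,13); (5,0)];
     [:: (0,0); (2,13); (5,26); (7,0)];
     [:: (0,0); (2,26); (4,0); (6,26)];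
     [:: (1,0); (5,26); (6,26); (7,26)];
     [:: (2,0); (3,13); (4,26); (5,26)];
     [:: (2,0); (3,26); (6,26); (7,0)]].

Definition cls42 : seq (seq (seq (nat*nat))) :=
  [:: [:: [:: (3,0); (5,27); (4,32)]; [:: (0,0); (5,14); (1,28)]; [:: (4,13); (2,15); (1,18)]; [:: (2,13); (6,2); (4,18)]; [:: (0,26); (1,14); (3,2)]; [:: (6,0); (5,28); (7,18)]; [:: (2,26); (7,28); (6,31)]; [:: (0,13); (3,1); (7,2)]];
     [:: [:: (3,0); (5,30); (4,11)]; [:: (0,0); (5,17); (1,34)]; [:: (4,13); (2,21); (1,33)]; [:: (2,13); (6,8); (4,33)]; [:: (0,26); (1,17); (3,8)]; [:: (6,0); (5,34); (7,33)]; [:: (2,26); (7,34); (6,7)]; [:: (0,13); (3,4); (7,8)]];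
     [:: [:: (3,0); (5,3); (4,5)]; [:: (0,0); (5,29); (1,19)]; [:: (4,13); (2,6); (1,15)]; [:: (2,13); (6,32); (4,15)]; [:: (0,26); (1,29); (3,32)]; [:: (6,0); (5,19); (7,15)]; [:: (2,26); (7,19); (6,28)]; [:: (0,13); (3,16); (7,32)]];
     [:: [:: (3,0); (5,12); (4,20)]; [:: (0,0); (5,38); (1,37)]; [:: (4,13); (2,24); (1,21)]; [:: (2,13); (6,11); (4,21)]; [:: (0,26); (1,38); (3,11)]; [:: (6,0); (5,37); (7,21)]; [:: (2,26); (7,37); (6,34)]; [:: (0,13); (3,25); (7,11)]];
     [:: [:: (3,0); (5,9); (4,2)]; [:: (0,0); (5,35); (1,31)]; [:: (4,13); (2,18); (1,6)]; [:: (2,13); (6,5); (4,6)]; [:: (0,26); (1,35); (3,5)]; [:: (6,0); (5,31); (7,6)]; [:: (2,26); (7,31); (6,19)]; [:: (0,13); (3,22); (7,5)]];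
     [:: [:: (3,0); (5,36); (4,8)]; [:: (0,0); (5,23); (1,7)]; [:: (4,13); (2,33); (1,24)]; [:: (2,13); (6,20); (4,24)]; [:: (0,26); (1,23); (3,20)]; [:: (6,0); (5,7); (7,24)]; [:: (2,26); (7,7); (6,37)]; [:: (0,13); (3,10); (7,20)]];
     [:: [:: (4,0); (6,15); (5,17)]; [:: (1,0); (6,2); (2,31)]; [:: (5,13); (3,27); (2,6)]; [:: (3,13); (0,14); (5,6)]; [:: (1,26); (2,2); (4,5)]; [:: (0,0); (6,1); (7,15)]; [:: (3,26); (7,1); (0,28)]; [:: (1,13); (4,1); (7,29)]];
     [:: [:: (4,0); (6,21); (5,29)]; [:: (1,0); (6,8); (2,7)]; [:: (5,13); (3,30); (2,24)]; [:: (3,13); (0,17); (5,24)]; [:: (1,26); (2,8); (4,20)]; [:: (0,0); (6,4); (7,21)]; [:: (3,26); (7,4); (0,34)]; [:: (1,13); (4,4); (7,38)]];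
     [:: [:: (4,0); (6,6); (5,38)]; [:: (1,0); (6,32); (2,28)]; [:: (5,13); (3,3); (2,18)]; [:: (3,13); (0,29); (5,18)]; [:: (1,26); (2,32); (4,2)]; [:: (0,0); (6,16); (7,6)]; [:: (3,26); (7,16); (0,19)]; [:: (1,13); (4,16); (7,35)]];
     [:: [:: (4,0); (6,24); (5,35)]; [:: (1,0); (6,11); (2,34)]; [:: (5,13); (3,12); (2,33)]; [:: (3,13); (0,38); (5,33)]; [:: (1,26); (2,11); (4,8)]; [:: (0,0); (6,25); (7,24)]; [:: (3,26); (7,25); (0,37)]; [:: (1,13); (4,25); (7,23)]];
     [:: [:: (4,0); (6,18); (5,23)]; [:: (1,0); (6,5); (2,19)]; [:: (5,13); (3,9); (2,15)]; [:: (3,13); (0,35); (5,15)]; [:: (1,26); (2,5); (4,32)]; [:: (0,0); (6,22); (7,18)]; [:: (3,26); (7,22); (0,31)]; [:: (1,13); (4,22); (7,14)]];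
     [:: [:: (4,0); (6,33); (5,14)]; [:: (1,0); (6,20); (2,37)]; [:: (5,13); (3,36); (2,21)]; [:: (3,13); (0,23); (5,21)]; [:: (1,26); (2,20); (4,11)]; [:: (0,0); (6,10); (7,33)]; [:: (3,26); (7,10); (0,7)]; [:: (1,13); (4,10); (7,17)]];
     [:: [:: (5,0); (0,15); (6,14)]; [:: (2,0); (0,14); (3,19)]; [:: (6,13); (4,15); (3,18)]; [:: (4,13); (1,2); (6,18)]; [:: (2,26); (3,14); (5,32)]; [:: (1,0); (0,28); (7,30)]; [:: (4,26); (7,1); (1,16)]; [:: (2,13); (5,1); (7,32)]];
     [:: [:: (5,0); (0,21); (6,17)]; [:: (2,0); (0,17); (3,37)]; [:: (6,13); (4,21); (3,33)]; [:: (4,13); (1,8); (6,33)]; [:: (2,26); (3,17); (5,11)]; [:: (1,0); (0,34); (7,3)]; [:: (4,26); (7,4); (1,25)]; [:: (2,13); (5,4); (7,11)]];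
     [:: [:: (5,0); (0,6); (6,29)]; [:: (2,0); (0,29); (3,31)]; [:: (6,13); (4,6); (3,15)]; [:: (4,13); (1,32); (6,15)]; [:: (2,26); (3,29); (5,5)]; [:: (1,0); (0,19); (7,12)]; [:: (4,26); (7,16); (1,22)]; [:: (2,13); (5,16); (7,5)]];
     [:: [:: (5,0); (0,24); (6,38)]; [:: (2,0); (0,38); (3,7)]; [:: (6,13); (4,24); (3,21)]; [:: (4,13); (1,11); (6,21)]; [:: (2,26); (3,38); (5,20)]; [:: (1,0); (0,37); (7,9)]; [:: (4,26); (7,25); (1,10)]; [:: (2,13); (5,25); (7,20)]];
     [:: [:: (5,0); (0,18); (6,35)]; [:: (2,0); (0,35); (3,28)]; [:: (6,13); (4,18); (3,6)]; [:: (4,13); (1,5); (6,6)]; [:: (2,26); (3,35); (5,2)]; [:: (1,0); (0,31); (7,36)]; [:: (4,26); (7,22); (1,1)]; [:: (2,13); (5,22); (7,2)]];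
     [:: [:: (5,0); (0,33); (6,23)]; [:: (2,0); (0,23); (3,34)]; [:: (6,13); (4,33); (3,24)]; [:: (4,13); (1,20); (6,24)]; [:: (2,26); (3,23); (5,8)]; [:: (1,0); (0,7); (7,27)]; [:: (4,26); (7,10); (1,4)]; [:: (2,13); (5,10); (7,8)]];
     [:: [:: (6,0); (1,27); (0,2)]; [:: (3,0); (1,2); (4,1)]; [:: (0,13); (5,15); (4,27)]; [:: (5,13); (2,14); (0,3)]; [:: (3,26); (4,2); (6,5)]; [:: (2,0); (1,28); (7,30)]; [:: (5,26); (7,28); (2,4)]; [:: (3,13); (6,1); (7,2)]];
     [:: [:: (6,0); (1,30); (0,8)]; [:: (3,0); (1,8); (4,4)]; [:: (0,13); (5,21); (4,30)]; [:: (5,13); (2,17); (0,12)]; [:: (3,26); (4,8); (6,20)]; [:: (2,0); (1,34); (7,3)]; [:: (5,26); (7,34); (2,16)]; [:: (3,13); (6,4); (7,8)]];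
     [:: [:: (6,0); (1,3); (0,32)]; [:: (3,0); (1,32); (4,16)]; [:: (0,13); (5,6); (4,3)]; [:: (5,13); (2,29); (0,9)]; [:: (3,26); (4,32); (6,2)]; [:: (2,0); (1,19); (7,12)]; [:: (5,26); (7,19); (2,25)]; [:: (3,13); (6,16); (7,32)]];
     [:: [:: (6,0); (1,12); (0,11)]; [:: (3,0); (1,11); (4,25)]; [:: (0,13); (5,24); (4,12)]; [:: (5,13); (2,38); (0,36)]; [:: (3,26); (4,11); (6,8)]; [:: (2,0); (1,37); (7,9)]; [:: (5,26); (7,37); (2,22)]; [:: (3,13); (6,25); (7,11)]];
     [:: [:: (6,0); (1,9); (0,5)]; [:: (3,0); (1,5); (4,22)]; [:: (0,13); (5,18); (4,9)]; [:: (5,13); (2,35); (0,27)]; [:: (3,26); (4,5); (6,32)]; [:: (2,0); (1,31); (7,36)]; [:: (5,26); (7,31); (2,10)]; [:: (3,13); (6,22); (7,5)]];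
     [:: [:: (6,0); (1,36); (0,20)]; [:: (3,0); (1,20); (4,10)]; [:: (0,13); (5,33); (4,36)]; [:: (5,13); (2,23); (0,30)]; [:: (3,26); (4,20); (6,11)]; [:: (2,0); (1,7); (7,27)]; [:: (5,26); (7,7); (2,1)]; [:: (3,13); (6,10); (7,20)]];
     [:: [:: (0,0); (2,15); (1,14)]; [:: (4,0); (2,14); (5,16)]; [:: (1,13); (6,27); (5,3)]; [:: (6,13); (3,14); (1,6)]; [:: (4,26); (5,2); (0,14)]; [:: (3,0); (2,28); (7,18)]; [:: (6,26); (7,28); (3,1)]; [:: (4,13); (0,28); (7,14)]];
     [:: [:: (0,0); (2,21); (1,17)]; [:: (4,0); (2,17); (5,25)]; [:: (1,13); (6,30); (5,12)]; [:: (6,13); (3,17); (1,24)]; [:: (4,26); (5,8); (0,17)]; [:: (3,0); (2,34); (7,33)]; [:: (6,26); (7,34); (3,4)]; [:: (4,13); (0,34); (7,17)]];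
     [:: [:: (0,0); (2,6); (1,29)]; [:: (4,0); (2,29); (5,22)]; [:: (1,13); (6,3); (5,9)]; [:: (6,13); (3,29); (1,18)]; [:: (4,26); (5,32); (0,29)]; [:: (3,0); (2,19); (7,15)]; [:: (6,26); (7,19); (3,16)]; [:: (4,13); (0,19); (7,29)]];
     [:: [:: (0,0); (2,24); (1,38)]; [:: (4,0); (2,38); (5,10)]; [:: (1,13); (6,12); (5,36)]; [:: (6,13); (3,38); (1,33)]; [:: (4,26); (5,11); (0,38)]; [:: (3,0); (2,37); (7,21)]; [:: (6,26); (7,37); (3,25)]; [:: (4,13); (0,37); (7,38)]];
     [:: [:: (0,0); (2,18); (1,35)]; [:: (4,0); (2,35); (5,1)]; [:: (1,13); (6,9); (5,27)]; [:: (6,13); (3,35); (1,15)]; [:: (4,26); (5,5); (0,35)]; [:: (3,0); (2,31); (7,6)]; [:: (6,26); (7,31); (3,22)]; [:: (4,13); (0,31); (7,35)]];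
     [:: [:: (0,0); (2,33); (1,23)]; [:: (4,0); (2,23); (5,4)]; [:: (1,13); (6,36); (5,30)]; [:: (6,13); (3,23); (1,21)]; [:: (4,26); (5,20); (0,23)]; [:: (3,0); (2,7); (7,24)]; [:: (6,26); (7,7); (3,10)]; [:: (4,13); (0,7); (7,23)]];
     [:: [:: (1,0); (3,15); (2,14)]; [:: (5,0); (3,2); (6,4)]; [:: (2,13); (0,15); (6,27)]; [:: (0,13); (4,2); (2,27)]; [:: (5,26); (6,14); (1,32)]; [:: (4,0); (3,1); (7,6)]; [:: (0,26); (7,1); (4,28)]; [:: (5,13); (1,1); (7,29)]];
     [:: [:: (1,0); (3,21); (2,17)]; [:: (5,0); (3,8); (6,16)]; [:: (2,13); (0,21); (6,30)]; [:: (0,13); (4,8); (2,30)]; [:: (5,26); (6,17); (1,11)]; [:: (4,0); (3,4); (7,24)]; [:: (0,26); (7,4); (4,34)]; [:: (5,13); (1,4); (7,38)]];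
     [:: [:: (1,0); (3,6); (2,29)]; [:: (5,0); (3,32); (6,25)]; [:: (2,13); (0,6); (6,3)]; [:: (0,13); (4,32); (2,3)]; [:: (5,26); (6,29); (1,5)]; [:: (4,0); (3,16); (7,18)]; [:: (0,26); (7,16); (4,19)]; [:: (5,13); (1,16); (7,35)]];
     [:: [:: (1,0); (3,24); (2,38)]; [:: (5,0); (3,11); (6,22)]; [:: (2,13); (0,24); (6,12)]; [:: (0,13); (4,11); (2,12)]; [:: (5,26); (6,38); (1,20)]; [:: (4,0); (3,25); (7,33)]; [:: (0,26); (7,25); (4,37)]; [:: (5,13); (1,25); (7,23)]];
     [:: [:: (1,0); (3,18); (2,35)]; [:: (5,0); (3,5); (6,10)]; [:: (2,13); (0,18); (6,9)]; [:: (0,13); (4,5); (2,9)]; [:: (5,26); (6,35); (1,2)]; [:: (4,0); (3,22); (7,15)]; [:: (0,26); (7,22); (4,31)]; [:: (5,13); (1,22); (7,14)]];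
     [:: [:: (1,0); (3,33); (2,23)]; [:: (5,0); (3,20); (6,1)]; [:: (2,13); (0,33); (6,36)]; [:: (0,13); (4,20); (2,36)]; [:: (5,26); (6,23); (1,8)]; [:: (4,0); (3,10); (7,21)]; [:: (0,26); (7,10); (4,7)]; [:: (5,13); (1,10); (7,17)]];
     [:: [:: (2,0); (4,15); (3,17)]; [:: (6,0); (4,14); (0,28)]; [:: (3,13); (1,27); (0,3)]; [:: (1,13); (5,2); (3,27)]; [:: (6,26); (0,2); (2,5)]; [:: (5,0); (4,28); (7,30)]; [:: (1,26); (7,1); (5,19)]; [:: (6,13); (2,1); (7,2)]];
     [:: [:: (2,0); (4,21); (3,29)]; [:: (6,0); (4,17); (0,34)]; [:: (3,13); (1,30); (0,12)]; [:: (1,13); (5,8); (3,30)]; [:: (6,26); (0,8); (2,20)]; [:: (5,0); (4,34); (7,3)]; [:: (1,26); (7,4); (5,37)]; [:: (6,13); (2,4); (7,8)]];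
     [:: [:: (2,0); (4,6); (3,38)]; [:: (6,0); (4,29); (0,19)]; [:: (3,13); (1,3); (0,9)]; [:: (1,13); (5,32); (3,3)]; [:: (6,26); (0,32); (2,2)]; [:: (5,0); (4,19); (7,12)]; [:: (1,26); (7,16); (5,31)]; [:: (6,13); (2,16); (7,32)]];
     [:: [:: (2,0); (4,24); (3,35)]; [:: (6,0); (4,38); (0,37)]; [:: (3,13); (1,12); (0,36)]; [:: (1,13); (5,11); (3,12)]; [:: (6,26); (0,11); (2,8)]; [:: (5,0); (4,37); (7,9)]; [:: (1,26); (7,25); (5,7)]; [:: (6,13); (2,25); (7,11)]];
     [:: [:: (2,0); (4,18); (3,23)]; [:: (6,0); (4,35); (0,31)]; [:: (3,13); (1,9); (0,27)]; [:: (1,13); (5,5); (3,9)]; [:: (6,26); (0,5); (2,32)]; [:: (5,0); (4,31); (7,36)]; [:: (1,26); (7,22); (5,28)]; [:: (6,13); (2,22); (7,5)]];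
     [:: [:: (2,0); (4,33); (3,14)]; [:: (6,0); (4,23); (0,7)]; [:: (3,13); (1,36); (0,30)]; [:: (1,13); (5,20); (3,36)]; [:: (6,26); (0,20); (2,11)]; [:: (5,0); (4,7); (7,27)]; [:: (1,26); (7,10); (5,34)]; [:: (6,13); (2,10); (7,20)]]].

Definition qds42 : seq (seq (nat*nat)) :=
  [:: [:: (0,0); (1,0); (2,0); (3,0)];
     [:: (0,0); (1,13); (2,26); (4,0)];
     [:: (0,0); (1,26); (5,0); (6,0)];
     [:: (0,0); (3,13); (4,26); (5,13)];
     [:: (0,0); (4,13); (5,26); (7,0)];
     [:: (0,0); (3,26); (6,13); (7,26)];
     [:: (0,0); (2,13); (6,26); (7,13)];
     [:: (1,0); (2,26); (5,26); (7,13)];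
     [:: (2,0); (3,13); (4,0); (6,26)];
     [:: (1,0); (4,0); (6,0); (7,0)];
     [:: (1,0); (3,13); (4,13); (7,26)];
     [:: (1,0); (3,26); (5,0); (6,26)];
     [:: (2,0); (3,26); (5,13); (7,13)];
     [:: (2,0); (4,26); (5,26); (6,0)]].

Definition cls43 : seq (seq (seq (nat*nat))) :=
  [:: [:: [:: (3,0); (5,27); (4,32)]; [:: (0,0); (5,14); (1,28)]; [:: (4,13); (2,15); (1,18)]; [:: (2,13); (6,2); (4,18)]; [:: (0,26); (1,14); (3,2)]; [:: (6,0); (5,28); (7,18)]; [:: (2,26); (7,28); (6,31)]; [:: (0,13); (3,1); (7,2)]];
     [:: [:: (3,0); (5,30); (4,11)]; [:: (0,0); (5,17); (1,34)]; [:: (4,13); (2,21); (1,33)]; [:: (2,13); (6,8); (4,33)]; [:: (0,26); (1,17); (3,8)]; [:: (6,0); (5,34); (7,33)]; [:: (2,26); (7,34); (6,7)]; [:: (0,13); (3,4); (7,8)]];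
     [:: [:: (3,0); (5,3); (4,5)]; [:: (0,0); (5,29); (1,19)]; [:: (4,13); (2,6); (1,15)]; [:: (2,13); (6,32); (4,15)]; [:: (0,26); (1,29); (3,32)]; [:: (6,0); (5,19); (7,15)]; [:: (2,26); (7,19); (6,28)]; [:: (0,13); (3,16); (7,32)]];
     [:: [:: (3,0); (5,12); (4,20)]; [:: (0,0); (5,38); (1,37)]; [:: (4,13); (2,24); (1,21)]; [:: (2,13); (6,11); (4,21)]; [:: (0,26); (1,38); (3,11)]; [:: (6,0); (5,37); (7,21)]; [:: (2,26); (7,37); (6,34)]; [:: (0,13); (3,25); (7,11)]];
     [:: [:: (3,0); (5,9); (4,2)]; [:: (0,0); (5,35); (1,31)]; [:: (4,13); (2,18); (1,6)]; [:: (2,13); (6,5); (4,6)]; [:: (0,26); (1,35); (3,5)]; [:: (6,0); (5,31); (7,6)]; [:: (2,26); (7,31); (6,19)]; [:: (0,13); (3,22); (7,5)]];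
     [:: [:: (3,0); (5,36); (4,8)]; [:: (0,0); (5,23); (1,7)]; [:: (4,13); (2,33); (1,24)]; [:: (2,13); (6,20); (4,24)]; [:: (0,26); (1,23); (3,20)]; [:: (6,0); (5,7); (7,24)]; [:: (2,26); (7,7); (6,37)]; [:: (0,13); (3,10); (7,20)]];
     [:: [:: (4,0); (6,15); (5,17)]; [:: (1,0); (6,2); (2,31)]; [:: (5,13); (3,27); (2,6)]; [:: (3,13); (0,14); (5,6)]; [:: (1,26); (2,2); (4,5)]; [:: (0,0); (6,1); (7,15)]; [:: (3,26); (7,1); (0,28)]; [:: (1,13); (4,1); (7,29)]];
     [:: [:: (4,0); (6,21); (5,29)]; [:: (1,0); (6,8); (2,7)]; [:: (5,13); (3,30); (2,24)]; [:: (3,13); (0,17); (5,24)]; [:: (1,26); (2,8); (4,20)]; [:: (0,0); (6,4); (7,21)]; [:: (3,26); (7,4); (0,34)]; [:: (1,13); (4,4); (7,38)]];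
     [:: [:: (4,0); (6,6); (5,38)]; [:: (1,0); (6,32); (2,28)]; [:: (5,13); (3,3); (2,18)]; [:: (3,13); (0,29); (5,18)]; [:: (1,26); (2,32); (4,2)]; [:: (0,0); (6,16); (7,6)]; [:: (3,26); (7,16); (0,19)]; [:: (1,13); (4,16); (7,35)]];
     [:: [:: (4,0); (6,24); (5,35)]; [:: (1,0); (6,11); (2,34)]; [:: (5,13); (3,12); (2,33)]; [:: (3,13); (0,38); (5,33)]; [:: (1,26); (2,11); (4,8)]; [:: (0,0); (6,25); (7,24)]; [:: (3,26); (7,25); (0,37)]; [:: (1,13); (4,25); (7,23)]];
     [:: [:: (4,0); (6,18); (5,23)]; [:: (1,0); (6,5); (2,19)]; [:: (5,13); (3,9); (2,15)]; [:: (3,13); (0,35); (5,15)]; [:: (1,26); (2,5); (4,32)]; [:: (0,0); (6,22); (7,18)]; [:: (3,26); (7,22); (0,31)]; [:: (1,13); (4,22); (7,14)]];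
     [:: [:: (4,0); (6,33); (5,14)]; [:: (1,0); (6,20); (2,37)]; [:: (5,13); (3,36); (2,21)]; [:: (3,13); (0,23); (5,21)]; [:: (1,26); (2,20); (4,11)]; [:: (0,0); (6,10); (7,33)]; [:: (3,26); (7,10); (0,7)]; [:: (1,13); (4,10); (7,17)]];
     [:: [:: (5,0); (0,15); (6,14)]; [:: (2,0); (0,14); (3,19)]; [:: (6,13); (4,15); (3,18)]; [:: (4,13); (1,2); (6,18)]; [:: (2,26); (3,14); (5,32)]; [:: (1,0); (0,28); (7,30)]; [:: (4,26); (7,1); (1,16)]; [:: (2,13); (5,1); (7,32)]];
     [:: [:: (5,0); (0,21); (6,17)]; [:: (2,0); (0,17); (3,37)]; [:: (6,13); (4,21); (3,33)]; [:: (4,13); (1,8); (6,33)]; [:: (2,26); (3,17); (5,11)]; [:: (1,0); (0,34); (7,3)]; [:: (4,26); (7,4); (1,25)]; [:: (2,13); (5,4); (7,11)]];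
     [:: [:: (5,0); (0,6); (6,29)]; [:: (2,0); (0,29); (3,31)]; [:: (6,13); (4,6); (3,15)]; [:: (4,13); (1,32); (6,15)]; [:: (2,26); (3,29); (5,5)]; [:: (1,0); (0,19); (7,12)]; [:: (4,26); (7,16); (1,22)]; [:: (2,13); (5,16); (7,5)]];
     [:: [:: (5,0); (0,24); (6,38)]; [:: (2,0); (0,38); (3,7)]; [:: (6,13); (4,24); (3,21)]; [:: (4,13); (1,11); (6,21)]; [:: (2,26); (3,38); (5,20)]; [:: (1,0); (0,37); (7,9)]; [:: (4,26); (7,25); (1,10)]; [:: (2,13); (5,25); (7,20)]];
     [:: [:: (5,0); (0,18); (6,35)]; [:: (2,0); (0,35); (3,28)]; [:: (6,13); (4,18); (3,6)]; [:: (4,13); (1,5); (6,6)]; [:: (2,26); (3,35); (5,2)]; [:: (1,0); (0,31); (7,36)]; [:: (4,26); (7,22); (1,1)]; [:: (2,13); (5,22); (7,2)]];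
     [:: [:: (5,0); (0,33); (6,23)]; [:: (2,0); (0,23); (3,34)]; [:: (6,13); (4,33); (3,24)]; [:: (4,13); (1,20); (6,24)]; [:: (2,26); (3,23); (5,8)]; [:: (1,0); (0,7); (7,27)]; [:: (4,26); (7,10); (1,4)]; [:: (2,13); (5,10); (7,8)]];
     [:: [:: (6,0); (1,27); (0,2)]; [:: (3,0); (1,2); (4,1)]; [:: (0,13); (5,15); (4,27)]; [:: (5,13); (2,14); (0,3)]; [:: (3,26); (4,2); (6,5)]; [:: (2,0); (1,28); (7,30)]; [:: (5,26); (7,28); (2,4)]; [:: (3,13); (6,1); (7,2)]];
     [:: [:: (6,0); (1,30); (0,8)]; [:: (3,0); (1,8); (4,4)]; [:: (0,13); (5,21); (4,30)]; [:: (5,13); (2,17); (0,12)]; [:: (3,26); (4,8); (6,20)]; [:: (2,0); (1,34); (7,3)]; [:: (5,26); (7,34); (2,16)]; [:: (3,13); (6,4); (7,8)]];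
     [:: [:: (6,0); (1,3); (0,32)]; [:: (3,0); (1,32); (4,16)]; [:: (0,13); (5,6); (4,3)]; [:: (5,13); (2,29); (0,9)]; [:: (3,26); (4,32); (6,2)]; [:: (2,0); (1,19); (7,12)]; [:: (5,26); (7,19); (2,25)]; [:: (3,13); (6,16); (7,32)]];
     [:: [:: (6,0); (1,12); (0,11)]; [:: (3,0); (1,11); (4,25)]; [:: (0,13); (5,24); (4,12)]; [:: (5,13); (2,38); (0,36)]; [:: (3,26); (4,11); (6,8)]; [:: (2,0); (1,37); (7,9)]; [:: (5,26); (7,37); (2,22)]; [:: (3,13); (6,25); (7,11)]];
     [:: [:: (6,0); (1,9); (0,5)]; [:: (3,0); (1,5); (4,22)]; [:: (0,13); (5,18); (4,9)]; [:: (5,13); (2,35); (0,27)]; [:: (3,26); (4,5); (6,32)]; [:: (2,0); (1,31); (7,36)]; [:: (5,26); (7,31); (2,10)]; [:: (3,13); (6,22); (7,5)]];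
     [:: [:: (6,0); (1,36); (0,20)]; [:: (3,0); (1,20); (4,10)]; [:: (0,13); (5,33); (4,36)]; [:: (5,13); (2,23); (0,30)]; [:: (3,26); (4,20); (6,11)]; [:: (2,0); (1,7); (7,27)]; [:: (5,26); (7,7); (2,1)]; [:: (3,13); (6,10); (7,20)]];
     [:: [:: (0,0); (2,15); (1,14)]; [:: (4,0); (2,14); (5,16)]; [:: (1,13); (6,27); (5,3)]; [:: (6,13); (3,14); (1,6)]; [:: (4,26); (5,2); (0,14)]; [:: (3,0); (2,28); (7,18)]; [:: (6,26); (7,28); (3,1)]; [:: (4,13); (0,28); (7,14)]];
     [:: [:: (0,0); (2,21); (1,17)]; [:: (4,0); (2,17); (5,25)]; [:: (1,13); (6,30); (5,12)]; [:: (6,13); (3,17); (1,24)]; [:: (4,26); (5,8); (0,17)]; [:: (3,0); (2,34); (7,33)]; [:: (6,26); (7,34); (3,4)]; [:: (4,13); (0,34); (7,17)]];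
     [:: [:: (0,0); (2,6); (1,29)]; [:: (4,0); (2,29); (5,22)]; [:: (1,13); (6,3); (5,9)]; [:: (6,13); (3,29); (1,18)]; [:: (4,26); (5,32); (0,29)]; [:: (3,0); (2,19); (7,15)]; [:: (6,26); (7,19); (3,16)]; [:: (4,13); (0,19); (7,29)]];
     [:: [:: (0,0); (2,24); (1,38)]; [:: (4,0); (2,38); (5,10)]; [:: (1,13); (6,12); (5,36)]; [:: (6,13); (3,38); (1,33)]; [:: (4,26); (5,11); (0,38)]; [:: (3,0); (2,37); (7,21)]; [:: (6,26); (7,37); (3,25)]; [:: (4,13); (0,37); (7,38)]];
     [:: [:: (0,0); (2,18); (1,35)]; [:: (4,0); (2,35); (5,1)]; [:: (1,13); (6,9); (5,27)]; [:: (6,13); (3,35); (1,15)]; [:: (4,26); (5,5); (0,35)]; [:: (3,0); (2,31); (7,6)]; [:: (6,26); (7,31); (3,22)]; [:: (4,13); (0,31); (7,35)]];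
     [:: [:: (0,0); (2,33); (1,23)]; [:: (4,0); (2,23); (5,4)]; [:: (1,13); (6,36); (5,30)]; [:: (6,13); (3,23); (1,21)]; [:: (4,26); (5,20); (0,23)]; [:: (3,0); (2,7); (7,24)]; [:: (6,26); (7,7); (3,10)]; [:: (4,13); (0,7); (7,23)]];
     [:: [:: (1,0); (3,15); (2,14)]; [:: (5,0); (3,2); (6,4)]; [:: (2,13); (0,15); (6,27)]; [:: (0,13); (4,2); (2,27)]; [:: (5,26); (6,14); (1,32)]; [:: (4,0); (3,1); (7,6)]; [:: (0,26); (7,1); (4,28)]; [:: (5,13); (1,1); (7,29)]];
     [:: [:: (1,0); (3,21); (2,17)]; [:: (5,0); (3,8); (6,16)]; [:: (2,13); (0,21); (6,30)]; [:: (0,13); (4,8); (2,30)]; [:: (5,26); (6,17); (1,11)]; [:: (4,0); (3,4); (7,24)]; [:: (0,26); (7,4); (4,34)]; [:: (5,13); (1,4); (7,38)]];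
     [:: [:: (1,0); (3,6); (2,29)]; [:: (5,0); (3,32); (6,25)]; [:: (2,13); (0,6); (6,3)]; [:: (0,13); (4,32); (2,3)]; [:: (5,26); (6,29); (1,5)]; [:: (4,0); (3,16); (7,18)]; [:: (0,26); (7,16); (4,19)]; [:: (5,13); (1,16); (7,35)]];
     [:: [:: (1,0); (3,24); (2,38)]; [:: (5,0); (3,11); (6,22)]; [:: (2,13); (0,24); (6,12)]; [:: (0,13); (4,11); (2,12)]; [:: (5,26); (6,38); (1,20)]; [:: (4,0); (3,25); (7,33)]; [:: (0,26); (7,25); (4,37)]; [:: (5,13); (1,25); (7,23)]];
     [:: [:: (1,0); (3,18); (2,35)]; [:: (5,0); (3,5); (6,10)]; [:: (2,13); (0,18); (6,9)]; [:: (0,13); (4,5); (2,9)]; [:: (5,26); (6,35); (1,2)]; [:: (4,0); (3,22); (7,15)]; [:: (0,26); (7,22); (4,31)]; [:: (5,13); (1,22); (7,14)]];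
     [:: [:: (1,0); (3,33); (2,23)]; [:: (5,0); (3,20); (6,1)]; [:: (2,13); (0,33); (6,36)]; [:: (0,13); (4,20); (2,36)]; [:: (5,26); (6,23); (1,8)]; [:: (4,0); (3,10); (7,21)]; [:: (0,26); (7,10); (4,7)]; [:: (5,13); (1,10); (7,17)]];
     [:: [:: (2,0); (4,15); (3,17)]; [:: (6,0); (4,14); (0,28)]; [:: (3,13); (1,27); (0,3)]; [:: (1,13); (5,2); (3,27)]; [:: (6,26); (0,2); (2,5)]; [:: (5,0); (4,28); (7,30)]; [:: (1,26); (7,1); (5,19)]; [:: (6,13); (2,1); (7,2)]];
     [:: [:: (2,0); (4,21); (3,29)]; [:: (6,0); (4,17); (0,34)]; [:: (3,13); (1,30); (0,12)]; [:: (1,13); (5,8); (3,30)]; [:: (6,26); (0,8); (2,20)]; [:: (5,0); (4,34); (7,3)]; [:: (1,26); (7,4); (5,37)]; [:: (6,13); (2,4); (7,8)]];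
     [:: [:: (2,0); (4,6); (3,38)]; [:: (6,0); (4,29); (0,19)]; [:: (3,13); (1,3); (0,9)]; [:: (1,13); (5,32); (3,3)]; [:: (6,26); (0,32); (2,2)]; [:: (5,0); (4,19); (7,12)]; [:: (1,26); (7,16); (5,31)]; [:: (6,13); (2,16); (7,32)]];
     [:: [:: (2,0); (4,24); (3,35)]; [:: (6,0); (4,38); (0,37)]; [:: (3,13); (1,12); (0,36)]; [:: (1,13); (5,11); (3,12)]; [:: (6,26); (0,11); (2,8)]; [:: (5,0); (4,37); (7,9)]; [:: (1,26); (7,25); (5,7)]; [:: (6,13); (2,25); (7,11)]];
     [:: [:: (2,0); (4,18); (3,23)]; [:: (6,0); (4,35); (0,31)]; [:: (3,13); (1,9); (0,27)]; [:: (1,13); (5,5); (3,9)]; [:: (6,26); (0,5); (2,32)]; [:: (5,0); (4,31); (7,36)]; [:: (1,26); (7,22); (5,28)]; [:: (6,13); (2,22); (7,5)]];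
     [:: [:: (2,0); (4,33); (3,14)]; [:: (6,0); (4,23); (0,7)]; [:: (3,13); (1,36); (0,30)]; [:: (1,13); (5,20); (3,36)]; [:: (6,26); (0,20); (2,11)]; [:: (5,0); (4,7); (7,27)]; [:: (1,26); (7,10); (5,34)]; [:: (6,13); (2,10); (7,20)]];
     [:: [:: (5,0); (7,26); (4,26)]; [:: (0,13); (3,0); (6,26)]; [:: (6,0); (5,26); (3,26)]; [:: (0,0); (1,26); (4,13)]; [:: (4,0); (7,13); (3,13)]; [:: (2,0); (6,13); (1,13)]; [:: (1,0); (2,13); (5,13)]; [:: (2,26); (7,0); (0,26)]]].

Definition qds43 : seq (seq (nat*nat)) :=
  [:: [:: (0,0); (1,13); (3,0); (7,26)];
     [:: (0,0); (4,26); (5,13); (6,0)];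
     [:: (1,0); (4,13); (6,13); (7,0)];
     [:: (1,0); (2,0); (3,0); (4,0)];
     [:: (0,0); (1,0); (3,13); (5,0)];
     [:: (0,0); (2,13); (5,26); (7,0)];
     [:: (0,0); (2,26); (4,0); (6,26)];
     [:: (1,0); (5,26); (6,26); (7,26)];
     [:: (2,0); (3,13); (4,26); (5,26)];
     [:: (2,0); (3,26); (6,26); (7,0)]].

Definition cls44 : seq (seq (seq (nat*nat))) :=
  [:: [:: [:: (3,0); (5,27); (4,32)]; [:: (0,0); (5,14); (1,28)]; [:: (4,13); (2,15); (1,18)]; [:: (2,13); (6,2); (4,18)]; [:: (0,26); (1,14); (3,2)]; [:: (6,0); (5,28); (7,18)]; [:: (2,26); (7,28); (6,31)]; [:: (0,13); (3,1); (7,2)]];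
     [:: [:: (3,0); (5,30); (4,11)]; [:: (0,0); (5,17); (1,34)]; [:: (4,13); (2,21); (1,33)]; [:: (2,13); (6,8); (4,33)]; [:: (0,26); (1,17); (3,8)]; [:: (6,0); (5,34); (7,33)]; [:: (2,26); (7,34); (6,7)]; [:: (0,13); (3,4); (7,8)]];
     [:: [:: (3,0); (5,3); (4,5)]; [:: (0,0); (5,29); (1,19)]; [:: (4,13); (2,6); (1,15)]; [:: (2,13); (6,32); (4,15)]; [:: (0,26); (1,29); (3,32)]; [:: (6,0); (5,19); (7,15)]; [:: (2,26); (7,19); (6,28)]; [:: (0,13); (3,16); (7,32)]];
     [:: [:: (3,0); (5,12); (4,20)]; [:: (0,0); (5,38); (1,37)]; [:: (4,13); (2,24); (1,21)]; [:: (2,13); (6,11); (4,21)]; [:: (0,26); (1,38); (3,11)]; [:: (6,0); (5,37); (7,21)]; [:: (2,26); (7,37); (6,34)]; [:: (0,13); (3,25); (7,11)]];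
     [:: [:: (3,0); (5,9); (4,2)]; [:: (0,0); (5,35); (1,31)]; [:: (4,13); (2,18); (1,6)]; [:: (2,13); (6,5); (4,6)]; [:: (0,26); (1,35); (3,5)]; [:: (6,0); (5,31); (7,6)]; [:: (2,26); (7,31); (6,19)]; [:: (0,13); (3,22); (7,5)]];
     [:: [:: (3,0); (5,36); (4,8)]; [:: (0,0); (5,23); (1,7)]; [:: (4,13); (2,33); (1,24)]; [:: (2,13); (6,20); (4,24)]; [:: (0,26); (1,23); (3,20)]; [:: (6,0); (5,7); (7,24)]; [:: (2,26); (7,7); (6,37)]; [:: (0,13); (3,10); (7,20)]];
     [:: [:: (4,0); (6,15); (5,17)]; [:: (1,0); (6,2); (2,31)]; [:: (5,13); (3,27); (2,6)]; [:: (3,13); (0,14); (5,6)]; [:: (1,26); (2,2); (4,5)]; [:: (0,0); (6,1); (7,15)]; [:: (3,26); (7,1); (0,28)]; [:: (1,13); (4,1); (7,29)]];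
     [:: [:: (4,0); (6,21); (5,29)]; [:: (1,0); (6,8); (2,7)]; [:: (5,13); (3,30); (2,24)]; [:: (3,13); (0,17); (5,24)]; [:: (1,26); (2,8); (4,20)]; [:: (0,0); (6,4); (7,21)]; [:: (3,26); (7,4); (0,34)]; [:: (1,13); (4,4); (7,38)]];
     [:: [:: (4,0); (6,6); (5,38)]; [:: (1,0); (6,32); (2,28)]; [:: (5,13); (3,3); (2,18)]; [:: (3,13); (0,29); (5,18)]; [:: (1,26); (2,32); (4,2)]; [:: (0,0); (6,16); (7,6)]; [:: (3,26); (7,16); (0,19)]; [:: (1,13); (4,16); (7,35)]];
     [:: [:: (4,0); (6,24); (5,35)]; [:: (1,0); (6,11); (2,34)]; [:: (5,13); (3,12); (2,33)]; [:: (3,13); (0,38); (5,33)]; [:: (1,26); (2,11); (4,8)]; [:: (0,0); (6,25); (7,24)]; [:: (3,26); (7,25); (0,37)]; [:: (1,13); (4,25); (7,23)]];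
     [:: [:: (4,0); (6,18); (5,23)]; [:: (1,0); (6,5); (2,19)]; [:: (5,13); (3,9); (2,15)]; [:: (3,13); (0,35); (5,15)]; [:: (1,26); (2,5); (4,32)]; [:: (0,0); (6,22); (7,18)]; [:: (3,26); (7,22); (0,31)]; [:: (1,13); (4,22); (7,14)]];
     [:: [:: (4,0); (6,33); (5,14)]; [:: (1,0); (6,20); (2,37)]; [:: (5,13); (3,36); (2,21)]; [:: (3,13); (0,23); (5,21)]; [:: (1,26); (2,20); (4,11)]; [:: (0,0); (6,10); (7,33)]; [:: (3,26); (7,10); (0,7)]; [:: (1,13); (4,10); (7,17)]];
     [:: [:: (5,0); (0,15); (6,14)]; [:: (2,0); (0,14); (3,19)]; [:: (6,13); (4,15); (3,18)]; [:: (4,13); (1,2); (6,18)]; [:: (2,26); (3,14); (5,32)]; [:: (1,0); (0,28); (7,30)]; [:: (4,26); (7,1); (1,16)]; [:: (2,13); (5,1); (7,32)]];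
     [:: [:: (5,0); (0,21); (6,17)]; [:: (2,0); (0,17); (3,37)]; [:: (6,13); (4,21); (3,33)]; [:: (4,13); (1,8); (6,33)]; [:: (2,26); (3,17); (5,11)]; [:: (1,0); (0,34); (7,3)]; [:: (4,26); (7,4); (1,25)]; [:: (2,13); (5,4); (7,11)]];
     [:: [:: (5,0); (0,6); (6,29)]; [:: (2,0); (0,29); (3,31)]; [:: (6,13); (4,6); (3,15)]; [:: (4,13); (1,32); (6,15)]; [:: (2,26); (3,29); (5,5)]; [:: (1,0); (0,19); (7,12)]; [:: (4,26); (7,16); (1,22)]; [:: (2,13); (5,16); (7,5)]];
     [:: [:: (5,0); (0,24); (6,38)]; [:: (2,0); (0,38); (3,7)]; [:: (6,13); (4,24); (3,21)]; [:: (4,13); (1,11); (6,21)]; [:: (2,26); (3,38); (5,20)]; [:: (1,0); (0,37); (7,9)]; [:: (4,26); (7,25); (1,10)]; [:: (2,13); (5,25); (7,20)]];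
     [:: [:: (5,0); (0,18); (6,35)]; [:: (2,0); (0,35); (3,28)]; [:: (6,13); (4,18); (3,6)]; [:: (4,13); (1,5); (6,6)]; [:: (2,26); (3,35); (5,2)]; [:: (1,0); (0,31); (7,36)]; [:: (4,26); (7,22); (1,1)]; [:: (2,13); (5,22); (7,2)]];
     [:: [:: (5,0); (0,33); (6,23)]; [:: (2,0); (0,23); (3,34)]; [:: (6,13); (4,33); (3,24)]; [:: (4,13); (1,20); (6,24)]; [:: (2,26); (3,23); (5,8)]; [:: (1,0); (0,7); (7,27)]; [:: (4,26); (7,10); (1,4)]; [:: (2,13); (5,10); (7,8)]];
     [:: [:: (6,0); (1,27); (0,2)]; [:: (3,0); (1,2); (4,1)]; [:: (0,13); (5,15); (4,27)]; [:: (5,13); (2,14); (0,3)]; [:: (3,26); (4,2); (6,5)]; [:: (2,0); (1,28); (7,30)]; [:: (5,26); (7,28); (2,4)]; [:: (3,13); (6,1); (7,2)]];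
     [:: [:: (6,0); (1,30); (0,8)]; [:: (3,0); (1,8); (4,4)]; [:: (0,13); (5,21); (4,30)]; [:: (5,13); (2,17); (0,12)]; [:: (3,26); (4,8); (6,20)]; [:: (2,0); (1,34); (7,3)]; [:: (5,26); (7,34); (2,16)]; [:: (3,13); (6,4); (7,8)]];
     [:: [:: (6,0); (1,3); (0,32)]; [:: (3,0); (1,32); (4,16)]; [:: (0,13); (5,6); (4,3)]; [:: (5,13); (2,29); (0,9)]; [:: (3,26); (4,32); (6,2)]; [:: (2,0); (1,19); (7,12)]; [:: (5,26); (7,19); (2,25)]; [:: (3,13); (6,16); (7,32)]];
     [:: [:: (6,0); (1,12); (0,11)]; [:: (3,0); (1,11); (4,25)]; [:: (0,13); (5,24); (4,12)]; [:: (5,13); (2,38); (0,36)]; [:: (3,26); (4,11); (6,8)]; [:: (2,0); (1,37); (7,9)]; [:: (5,26); (7,37); (2,22)]; [:: (3,13); (6,25); (7,11)]];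
     [:: [:: (6,0); (1,9); (0,5)]; [:: (3,0); (1,5); (4,22)]; [:: (0,13); (5,18); (4,9)]; [:: (5,13); (2,35); (0,27)]; [:: (3,26); (4,5); (6,32)]; [:: (2,0); (1,31); (7,36)]; [:: (5,26); (7,31); (2,10)]; [:: (3,13); (6,22); (7,5)]];
     [:: [:: (6,0); (1,36); (0,20)]; [:: (3,0); (1,20); (4,10)]; [:: (0,13); (5,33); (4,36)]; [:: (5,13); (2,23); (0,30)]; [:: (3,26); (4,20); (6,11)]; [:: (2,0); (1,7); (7,27)]; [:: (5,26); (7,7); (2,1)]; [:: (3,13); (6,10); (7,20)]];
     [:: [:: (0,0); (2,15); (1,14)]; [:: (4,0); (2,14); (5,16)]; [:: (1,13); (6,27); (5,3)]; [:: (6,13); (3,14); (1,6)]; [:: (4,26); (5,2); (0,14)]; [:: (3,0); (2,28); (7,18)]; [:: (6,26); (7,28); (3,1)]; [:: (4,13); (0,28); (7,14)]];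
     [:: [:: (0,0); (2,21); (1,17)]; [:: (4,0); (2,17); (5,25)]; [:: (1,13); (6,30); (5,12)]; [:: (6,13); (3,17); (1,24)]; [:: (4,26); (5,8); (0,17)]; [:: (3,0); (2,34); (7,33)]; [:: (6,26); (7,34); (3,4)]; [:: (4,13); (0,34); (7,17)]];
     [:: [:: (0,0); (2,6); (1,29)]; [:: (4,0); (2,29); (5,22)]; [:: (1,13); (6,3); (5,9)]; [:: (6,13); (3,29); (1,18)]; [:: (4,26); (5,32); (0,29)]; [:: (3,0); (2,19); (7,15)]; [:: (6,26); (7,19); (3,16)]; [:: (4,13); (0,19); (7,29)]];
     [:: [:: (0,0); (2,24); (1,38)]; [:: (4,0); (2,38); (5,10)]; [:: (1,13); (6,12); (5,36)]; [:: (6,13); (3,38); (1,33)]; [:: (4,26); (5,11); (0,38)]; [:: (3,0); (2,37); (7,21)]; [:: (6,26); (7,37); (3,25)]; [:: (4,13); (0,37); (7,38)]];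
     [:: [:: (0,0); (2,18); (1,35)]; [:: (4,0); (2,35); (5,1)]; [:: (1,13); (6,9); (5,27)]; [:: (6,13); (3,35); (1,15)]; [:: (4,26); (5,5); (0,35)]; [:: (3,0); (2,31); (7,6)]; [:: (6,26); (7,31); (3,22)]; [:: (4,13); (0,31); (7,35)]];
     [:: [:: (0,0); (2,33); (1,23)]; [:: (4,0); (2,23); (5,4)]; [:: (1,13); (6,36); (5,30)]; [:: (6,13); (3,23); (1,21)]; [:: (4,26); (5,20); (0,23)]; [:: (3,0); (2,7); (7,24)]; [:: (6,26); (7,7); (3,10)]; [:: (4,13); (0,7); (7,23)]];
     [:: [:: (1,0); (3,15); (2,14)]; [:: (5,0); (3,2); (6,4)]; [:: (2,13); (0,15); (6,27)]; [:: (0,13); (4,2); (2,27)]; [:: (5,26); (6,14); (1,32)]; [:: (4,0); (3,1); (7,6)]; [:: (0,26); (7,1); (4,28)]; [:: (5,13); (1,1); (7,29)]];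
     [:: [:: (1,0); (3,21); (2,17)]; [:: (5,0); (3,8); (6,16)]; [:: (2,13); (0,21); (6,30)]; [:: (0,13); (4,8); (2,30)]; [:: (5,26); (6,17); (1,11)]; [:: (4,0); (3,4); (7,24)]; [:: (0,26); (7,4); (4,34)]; [:: (5,13); (1,4); (7,38)]];
     [:: [:: (1,0); (3,6); (2,29)]; [:: (5,0); (3,32); (6,25)]; [:: (2,13); (0,6); (6,3)]; [:: (0,13); (4,32); (2,3)]; [:: (5,26); (6,29); (1,5)]; [:: (4,0); (3,16); (7,18)]; [:: (0,26); (7,16); (4,19)]; [:: (5,13); (1,16); (7,35)]];
     [:: [:: (1,0); (3,24); (2,38)]; [:: (5,0); (3,11); (6,22)]; [:: (2,13); (0,24); (6,12)]; [:: (0,13); (4,11); (2,12)]; [:: (5,26); (6,38); (1,20)]; [:: (4,0); (3,25); (7,33)]; [:: (0,26); (7,25); (4,37)]; [:: (5,13); (1,25); (7,23)]];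
     [:: [:: (1,0); (3,18); (2,35)]; [:: (5,0); (3,5); (6,10)]; [:: (2,13); (0,18); (6,9)]; [:: (0,13); (4,5); (2,9)]; [:: (5,26); (6,35); (1,2)]; [:: (4,0); (3,22); (7,15)]; [:: (0,26); (7,22); (4,31)]; [:: (5,13); (1,22); (7,14)]];
     [:: [:: (1,0); (3,33); (2,23)]; [:: (5,0); (3,20); (6,1)]; [:: (2,13); (0,33); (6,36)]; [:: (0,13); (4,20); (2,36)]; [:: (5,26); (6,23); (1,8)]; [:: (4,0); (3,10); (7,21)]; [:: (0,26); (7,10); (4,7)]; [:: (5,13); (1,10); (7,17)]];
     [:: [:: (2,0); (4,15); (3,17)]; [:: (6,0); (4,14); (0,28)]; [:: (3,13); (1,27); (0,3)]; [:: (1,13); (5,2); (3,27)]; [:: (6,26); (0,2); (2,5)]; [:: (5,0); (4,28); (7,30)]; [:: (1,26); (7,1); (5,19)]; [:: (6,13); (2,1); (7,2)]];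
     [:: [:: (2,0); (4,21); (3,29)]; [:: (6,0); (4,17); (0,34)]; [:: (3,13); (1,30); (0,12)]; [:: (1,13); (5,8); (3,30)]; [:: (6,26); (0,8); (2,20)]; [:: (5,0); (4,34); (7,3)]; [:: (1,26); (7,4); (5,37)]; [:: (6,13); (2,4); (7,8)]];
     [:: [:: (2,0); (4,6); (3,38)]; [:: (6,0); (4,29); (0,19)]; [:: (3,13); (1,3); (0,9)]; [:: (1,13); (5,32); (3,3)]; [:: (6,26); (0,32); (2,2)]; [:: (5,0); (4,19); (7,12)]; [:: (1,26); (7,16); (5,31)]; [:: (6,13); (2,16); (7,32)]];
     [:: [:: (2,0); (4,24); (3,35)]; [:: (6,0); (4,38); (0,37)]; [:: (3,13); (1,12); (0,36)]; [:: (1,13); (5,11); (3,12)]; [:: (6,26); (0,11); (2,8)]; [:: (5,0); (4,37); (7,9)]; [:: (1,26); (7,25); (5,7)]; [:: (6,13); (2,25); (7,11)]];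
     [:: [:: (2,0); (4,18); (3,23)]; [:: (6,0); (4,35); (0,31)]; [:: (3,13); (1,9); (0,27)]; [:: (1,13); (5,5); (3,9)]; [:: (6,26); (0,5); (2,32)]; [:: (5,0); (4,31); (7,36)]; [:: (1,26); (7,22); (5,28)]; [:: (6,13); (2,22); (7,5)]];
     [:: [:: (2,0); (4,33); (3,14)]; [:: (6,0); (4,23); (0,7)]; [:: (3,13); (1,36); (0,30)]; [:: (1,13); (5,20); (3,36)]; [:: (6,26); (0,20); (2,11)]; [:: (5,0); (4,7); (7,27)]; [:: (1,26); (7,10); (5,34)]; [:: (6,13); (2,10); (7,20)]];
     [:: [:: (0,0); (1,13); (4,0)]; [:: (0,13); (2,26); (6,26)]; [:: (1,0); (2,13); (5,13)]; [:: (1,26); (6,0); (7,13)]; [:: (3,13); (5,26); (7,0)]; [:: (0,26); (4,13); (7,26)]; [:: (2,0); (3,26); (6,13)]; [:: (3,0); (4,26); (5,0)]];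
     [:: [:: (1,0); (0,13); (5,0)]; [:: (1,13); (3,26); (7,26)]; [:: (0,0); (3,13); (4,13)]; [:: (0,26); (7,0); (6,13)]; [:: (2,13); (4,26); (6,0)]; [:: (1,26); (5,13); (6,26)]; [:: (3,0); (2,26); (7,13)]; [:: (2,0); (5,26); (4,0)]]].

Definition qds44 : seq (seq (nat*nat)) :=
  [:: [:: (0,0); (1,0); (2,0); (3,0)];
     [:: (4,0); (5,0); (6,0); (7,0)];
     [:: (0,0); (2,26); (5,0); (7,26)];
     [:: (1,0); (3,26); (4,0); (6,26)];
     [:: (0,0); (3,26); (5,13); (6,0)];
     [:: (1,0); (2,26); (4,13); (7,0)]].

Lemma tpE g : type_points [:: (39, 8); (g, 1)] = 312 + g.
Proof. by rewrite /type_points !big_cons big_nil /= addn0 mul1n. Qed.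

Ltac solve_gdd cls qds :=
  apply: (@design_gdd cls qds); [ by vm_compute | by [] | by rewrite tpE | by vm_compute ].

Lemma gdd120 : exists_4GDD [:: (39, 8); (120, 1)]. Proof. solve_gdd cls40 qds40. Qed.
Lemma gdd123 : exists_4GDD [:: (39, 8); (123, 1)]. Proof. solve_gdd cls41 qds41. Qed.
Lemma gdd126 : exists_4GDD [:: (39, 8); (126, 1)]. Proof. solve_gdd cls42 qds42. Qed.
Lemma gdd129 : exists_4GDD [:: (39, 8); (129, 1)]. Proof. solve_gdd cls43 qds43. Qed.
Lemma gdd132 : exists_4GDD [:: (39, 8); (132, 1)]. Proof. solve_gdd cls44 qds44. Qed.

Theorem lemma2p2 :
  forall g : nat, g \in [:: 120; 123; 126; 129; 132] ->
    exists_4GDD [:: (39, 8); (g, 1)].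
Proof.
move=> g; rewrite !inE.
case/orP => [/eqP -> | ]; first exact: gdd120.
case/orP => [/eqP -> | ]; first exact: gdd123.
case/orP => [/eqP -> | ]; first exact: gdd126.
case/orP => [/eqP -> | /eqP ->]; first exact: gdd129.
exact: gdd132.
Qed.
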